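(* Let $0<a<b$, $I=[-b,-a]\cup[a,b]$, and let $f$ be a real-valued continuous function on $I$ such that $f|_{[-b,-a]}$ is the restriction of a function $f_1$ analytic in the half plane $\mathrm{Re}\,z<0$ and $f|_{[a,b]}$ is the restriction of a function $f_2$ analytic in the half plane $\mathrm{Re}\,z>0$. Then for every $\xi$ with $1<\xi<\bar\xi:=\frac{b+a}{b-a}$ there is a constant $C>0$ independent of $k$ such that $$E_k(f,I)\le C\,\xi^{-k/2}\quad\text{for all } k\ge0.$$
   Context: For a compact set $J\subset\mathbb R$ and real-valued continuous $f$ on $J$, $E_k(f,J)=\inf\{\max_{x\in J}|f(x)-p(x)|: p \text{ a polynomial with real coefficients of degree}\le k\}$. *)

(* Defs.v *)
From Stdlib Require Import Reals Lra.
Open Scope R_scope.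

Definition Cplx : Type := (R * R)%type.
Definition Cre (z : Cplx) : R := fst z.
Definition Cim (z : Cplx) : R := snd z.
Definition RtoC (x : R) : Cplx := (x, 0).
Definition Cadd (z w : Cplx) : Cplx := (fst z + fst w, snd z + snd w).
Definition Csub (z w : Cplx) : Cplx := (fst z - fst w, snd z - snd w).
Definition Cmul (z w : Cplx) : Cplx :=
  (fst z * fst w - snd z * snd w, fst z * snd w + snd z * fst w).
Fixpoint Cpow (z : Cplx) (n : nat) : Cplx :=
  match n with O => (1, 0) | S m => Cmul z (Cpow z m) end.
Definition Cmod (z : Cplx) : R := sqrt (fst z * fst z + snd z * snd z).

Fixpoint Csum (u : nat -> Cplx) (N : nat) : Cplx :=
  match N with O => u O | S M => Cadd (Csum u M) (u (S M)) end.

Definition Cseries_cv (u : nat -> Cplx) (l : Cplx) : Prop :=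
  Un_cv (fun N => fst (Csum u N)) (fst l) /\ Un_cv (fun N => snd (Csum u N)) (snd l).

Definition analytic_on (U : Cplx -> Prop) (g : Cplx -> Cplx) : Prop :=
  forall z0, U z0 ->
    exists r, 0 < r /\ exists c : nat -> Cplx,
      forall z, Cmod (Csub z z0) < r ->
        Cseries_cv (fun n => Cmul (c n) (Cpow (Csub z z0) n)) (g z).

Definition poly_eval (c : nat -> R) (k : nat) (x : R) : R :=
  sum_f_R0 (fun i => c i * x ^ i) k.

Definition sup_err (f p : R -> R) (J : R -> Prop) (s : R) : Prop :=
  is_lub (fun e => exists x, J x /\ e = Rabs (f x - p x)) s.

(** E_k(f,J) <= M, i.e. inf { max_J |f - p| : deg p <= k } <= M, unfolded:
    for every eps > 0 some p of degree <= k has max_J |f - p| <= M + eps. *)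
Definition Ek_le (f : R -> R) (J : R -> Prop) (k : nat) (M : R) : Prop :=
  forall eps, 0 < eps ->
    exists c : nat -> R, exists s,
      sup_err f (poly_eval c k) J s /\ s <= M + eps.

Definition continuous_on (f : R -> R) (J : R -> Prop) : Prop :=
  forall x, J x -> limit1_in f J (f x) x.

(* Main.v *)
Require Import Defs.
From Stdlib Require Import Reals Lra Lia Psatz.
From Coquelicot Require Import Coquelicot.
Open Scope R_scope.

Lemma Cmod_re_le (z : C) : Rabs (fst z) <= Cmod z.
Proof. unfold Cmod. rewrite <- sqrt_Rsqr_abs. apply sqrt_le_1_alt.
  unfold Rsqr; simpl; nra. Qed.

Lemma Cmod_im_le (z : C) : Rabs (snd z) <= Cmod z.
Proof. unfold Cmod. rewrite <- sqrt_Rsqr_abs. apply sqrt_le_1_alt.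
  unfold Rsqr; simpl; nra. Qed.

Lemma Cmod_le_sum (z : C) : Cmod z <= Rabs (fst z) + Rabs (snd z).
Proof. unfold Cmod. rewrite <- (sqrt_Rsqr (Rabs (fst z) + Rabs (snd z))).
  2: { pose proof (Rabs_pos (fst z)); pose proof (Rabs_pos (snd z)); lra. }
  apply sqrt_le_1_alt. unfold Rsqr; simpl.
  pose proof (Rabs_pos (fst z)); pose proof (Rabs_pos (snd z)).
  pose proof (Rsqr_abs (fst z)); pose proof (Rsqr_abs (snd z)); unfold Rsqr in *. nra. Qed.

Lemma Cmod_minus_sym (a b : C) : Cmod (a - b) = Cmod (b - a).
Proof. replace (a - b)%C with (- (b - a))%C by ring. apply Cmod_opp. Qed.

Lemma Cmod_pos (z : C) : z <> 0%C -> 0 < Cmod z.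
Proof. intros H. destruct (Cmod_ge_0 z) as [h|h]; auto.
  exfalso; apply H; apply Cmod_eq_0; auto. Qed.

Lemma Ceq_dec (z w : C) : {z = w} + {z <> w}.
Proof. destruct z as [z1 z2], w as [w1 w2].
  destruct (Req_EM_T z1 w1) as [e1|n1].
  - destruct (Req_EM_T z2 w2) as [e2|n2].
    + left; subst; auto.
    + right; intros H; inversion H; auto.
  - right; intros H; inversion H; auto. Qed.

Lemma Cmod_RtoC (x : R) : Cmod (RtoC x) = Rabs x.
Proof. apply Cmod_R. Qed.

Lemma Cmod_tri3 (a b c : C) : Cmod (a + b + c) <= Cmod a + Cmod b + Cmod c.
Proof. eapply Rle_trans. apply Cmod_triangle. pose proof (Cmod_triangle a b); lra. Qed.

Lemma Cmod_minus_le (a b : C) : Cmod a - Cmod b <= Cmod (a - b).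
Proof. replace a with ((a - b) + b)%C at 1 by ring. pose proof (Cmod_triangle (a-b) b). lra. Qed.

Definition ccont (g : C -> C) (p : C) : Prop :=
  forall eps, 0 < eps -> exists del, 0 < del /\
    forall w, Cmod (w - p) < del -> Cmod (g w - g p) < eps.

Lemma ccont_const (c p : C) : ccont (fun _ => c) p.
Proof. intros e He; exists 1; split; [lra|]. intros w _. cbv beta.
  replace (c - c)%C with (RtoC 0) by ring. rewrite Cmod_0; auto. Qed.

Lemma ccont_id (p : C) : ccont (fun w => w) p.
Proof. intros e He; exists e; split; auto. Qed.

Lemma ccont_plus g h p : ccont g p -> ccont h p -> ccont (fun w => g w + h w)%C p.
Proof. intros Hg Hh e He.
  destruct (Hg (e/2)) as [d1 [Hd1 H1]]; [lra|].
  destruct (Hh (e/2)) as [d2 [Hd2 H2]]; [lra|].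
  exists (Rmin d1 d2); split. apply Rmin_pos; auto.
  intros w Hw. cbv beta. replace (g w + h w - (g p + h p))%C with ((g w - g p) + (h w - h p))%C by ring.
  eapply Rle_lt_trans. apply Cmod_triangle.
  assert (Cmod (w-p) < d1) by (eapply Rlt_le_trans; [apply Hw| apply Rmin_l]).
  assert (Cmod (w-p) < d2) by (eapply Rlt_le_trans; [apply Hw| apply Rmin_r]).
  specialize (H1 w H). specialize (H2 w H0). lra. Qed.

Lemma ccont_opp g p : ccont g p -> ccont (fun w => - g w)%C p.
Proof. intros Hg e He. destruct (Hg e He) as [d [Hd H]]. exists d; split; auto.
  intros w Hw. cbv beta. replace (- g w - - g p)%C with (- (g w - g p))%C by ring.
  rewrite Cmod_opp; auto. Qed.

Lemma ccont_minus g h p : ccont g p -> ccont h p -> ccont (fun w => g w - h w)%C p.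
Proof. intros; apply ccont_plus; auto. apply ccont_opp; auto. Qed.

Lemma ccont_mult g h p : ccont g p -> ccont h p -> ccont (fun w => g w * h w)%C p.
Proof. intros Hg Hh e He.
  set (A := Cmod (g p)). set (B := Cmod (h p)).
  assert (HA : 0 <= A) by apply Cmod_ge_0. assert (HB : 0 <= B) by apply Cmod_ge_0.
  destruct (Hg (e / (4 * (B + 1)))) as [d1 [Hd1 H1]].
  { apply Rdiv_lt_0_compat; lra. }
  destruct (Hh (Rmin 1 (e / (4 * (A + 1))))) as [d2 [Hd2 H2]].
  { apply Rmin_pos; [lra|]. apply Rdiv_lt_0_compat; lra. }
  exists (Rmin d1 d2); split. apply Rmin_pos; auto.
  intros w Hw.
  assert (Hw1 : Cmod (w-p) < d1) by (eapply Rlt_le_trans; [apply Hw| apply Rmin_l]).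
  assert (Hw2 : Cmod (w-p) < d2) by (eapply Rlt_le_trans; [apply Hw| apply Rmin_r]).
  specialize (H1 w Hw1). specialize (H2 w Hw2). cbv beta.
  replace (g w * h w - g p * h p)%C with ((g w - g p) * h w + g p * (h w - h p))%C by ring.
  eapply Rle_lt_trans. apply Cmod_triangle. rewrite !Cmod_mult.
  assert (Hhw : Cmod (h w) <= B + 1).
  { replace (h w) with ((h w - h p) + h p)%C by ring.
    eapply Rle_trans. apply Cmod_triangle. fold B.
    assert (Cmod (h w - h p) < 1) by (eapply Rlt_le_trans; [apply H2|apply Rmin_l]). lra. }
  assert (H3 : Cmod (h w - h p) < e / (4 * (A + 1))) by (eapply Rlt_le_trans; [apply H2|apply Rmin_r]).
  assert (E1 : Cmod (g w - g p) * Cmod (h w) <= e / (4 * (B + 1)) * (B + 1)).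
  { apply Rmult_le_compat; try apply Cmod_ge_0; lra. }
  assert (E2 : A * Cmod (h w - h p) <= (A+1) * (e / (4 * (A + 1)))).
  { apply Rmult_le_compat; try apply Cmod_ge_0; lra. }
  replace (e / (4 * (B + 1)) * (B + 1)) with (e/4) in E1 by (field; lra).
  replace ((A+1) * (e / (4 * (A + 1)))) with (e/4) in E2 by (field; lra).
  unfold A in E2. lra. Qed.

Lemma ccont_inv g p : ccont g p -> g p <> 0%C -> ccont (fun w => / g w)%C p.
Proof. intros Hg Hp e He.
  set (A := Cmod (g p)). assert (HA : 0 < A) by (apply Cmod_pos; auto).
  destruct (Hg (Rmin (A/2) (e * A * A / 2))) as [d [Hd H]].
  { apply Rmin_pos; [lra|]. apply Rdiv_lt_0_compat; [|lra]. apply Rmult_lt_0_compat; nra. }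
  exists d; split; auto. intros w Hw. specialize (H w Hw). cbv beta.
  assert (H1 : Cmod (g w - g p) < A/2) by (eapply Rlt_le_trans; [apply H|apply Rmin_l]).
  assert (H2 : Cmod (g w - g p) < e * A * A / 2) by (eapply Rlt_le_trans; [apply H|apply Rmin_r]).
  assert (Hgw : A / 2 <= Cmod (g w)).
  { pose proof (Cmod_minus_le (g p) (g w)). rewrite Cmod_minus_sym in H0. fold A in H0. lra. }
  assert (gw0 : g w <> 0%C). { intro E; rewrite E, Cmod_0 in Hgw; lra. }
  replace (/ g w - / g p)%C with (- (g w - g p) / (g w * g p))%C by (field; auto).
  unfold Cdiv. rewrite Cmod_mult, Cmod_opp, Cmod_inv by (apply Cmult_neq_0; auto).
  rewrite Cmod_mult. fold A.
  apply Rlt_le_trans with ((e * A * A / 2) * / (Cmod (g w) * A)).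
  - apply Rmult_lt_compat_r. apply Rinv_0_lt_compat. apply Rmult_lt_0_compat; [apply Cmod_pos; auto| lra]. auto.
  - apply Rle_trans with ((e * A * A / 2) * / (A/2 * A)).
    + apply Rmult_le_compat_l. assert (0 < e * A * A / 2) by (apply Rdiv_lt_0_compat; [|lra]; apply Rmult_lt_0_compat; nra). lra.
      apply Rinv_le_contravar. apply Rmult_lt_0_compat; lra. apply Rmult_le_compat_r; lra.
    + right. field. lra. Qed.

Lemma ccont_local g h p r : 0 < r -> (forall w, Cmod (w - p) < r -> g w = h w) ->
  ccont h p -> ccont g p.
Proof. intros Hr Heq Hh e He. destruct (Hh e He) as [d [Hd H]].
  exists (Rmin d r); split. apply Rmin_pos; auto.
  intros w Hw.
  assert (Hp : Cmod (p - p) < r). { replace (p - p)%C with (RtoC 0) by ring. rewrite Cmod_0; lra. }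
  rewrite (Heq w), (Heq p); auto.
  apply H. eapply Rlt_le_trans; [apply Hw|apply Rmin_l].
  eapply Rlt_le_trans; [apply Hw|apply Rmin_r]. Qed.

(* Caratheodory differentiability *)
Definition D1c (g : C -> C) (p : C) : Prop :=
  exists r, 0 < r /\ exists phi, ccont phi p /\
    forall w, Cmod (w - p) < r -> g w = (g p + phi w * (w - p))%C.

Lemma D1c_ccont g p : D1c g p -> ccont g p.
Proof. intros [r [Hr [phi [Hphi Heq]]]].
  apply ccont_local with (h := fun w => (g p + phi w * (w - p))%C) (r := r); auto.
  apply ccont_plus. apply ccont_const. apply ccont_mult; auto.
  apply ccont_minus. apply ccont_id. apply ccont_const. Qed.

Lemma D1c_local g h p r : 0 < r -> (forall w, Cmod (w - p) < r -> g w = h w) ->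
  D1c h p -> D1c g p.
Proof. intros Hr Heq [r' [Hr' [phi [Hphi H]]]].
  exists (Rmin r r'); split. apply Rmin_pos; auto.
  exists phi; split; auto. intros w Hw.
  assert (Cmod (p - p) < r). { replace (p - p)%C with (RtoC 0) by ring. rewrite Cmod_0; lra. }
  assert (Cmod (w - p) < r) by (eapply Rlt_le_trans; [apply Hw|apply Rmin_l]).
  rewrite (Heq w), (Heq p); auto. apply H. eapply Rlt_le_trans; [apply Hw|apply Rmin_r]. Qed.

Lemma D1c_const c p : D1c (fun _ => c) p.
Proof. exists 1; split; [lra|]. exists (fun _ => 0%C); split. apply ccont_const.
  intros; ring. Qed.

Lemma D1c_id p : D1c (fun w => w) p.
Proof. exists 1; split; [lra|]. exists (fun _ => 1%C); split. apply ccont_const.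
  intros; ring. Qed.

Lemma D1c_plus g h p : D1c g p -> D1c h p -> D1c (fun w => g w + h w)%C p.
Proof. intros [r1 [Hr1 [f1 [Hf1 H1]]]] [r2 [Hr2 [f2 [Hf2 H2]]]].
  exists (Rmin r1 r2); split. apply Rmin_pos; auto.
  exists (fun w => f1 w + f2 w)%C; split. apply ccont_plus; auto.
  intros w Hw. rewrite H1, H2. ring.
  eapply Rlt_le_trans; [apply Hw|apply Rmin_r].
  eapply Rlt_le_trans; [apply Hw|apply Rmin_l]. Qed.

Lemma D1c_opp g p : D1c g p -> D1c (fun w => - g w)%C p.
Proof. intros [r1 [Hr1 [f1 [Hf1 H1]]]]. exists r1; split; auto.
  exists (fun w => - f1 w)%C; split. apply ccont_opp; auto.
  intros w Hw. rewrite H1 by auto. ring. Qed.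

Lemma D1c_minus g h p : D1c g p -> D1c h p -> D1c (fun w => g w - h w)%C p.
Proof. intros; apply D1c_plus; auto; apply D1c_opp; auto. Qed.

Lemma D1c_mult g h p : D1c g p -> D1c h p -> D1c (fun w => g w * h w)%C p.
Proof. intros Hg Hh. pose proof (D1c_ccont _ _ Hh) as Hch.
  destruct Hg as [r1 [Hr1 [f1 [Hf1 H1]]]]. destruct Hh as [r2 [Hr2 [f2 [Hf2 H2]]]].
  exists (Rmin r1 r2); split. apply Rmin_pos; auto.
  exists (fun w => f1 w * h w + g p * f2 w)%C; split.
  apply ccont_plus. apply ccont_mult; auto. apply ccont_mult; auto. apply ccont_const.
  intros w Hw.
  assert (Cmod (w - p) < r1) by (eapply Rlt_le_trans; [apply Hw|apply Rmin_l]).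
  assert (Cmod (w - p) < r2) by (eapply Rlt_le_trans; [apply Hw|apply Rmin_r]).
  pose proof (H1 w H). pose proof (H2 w H0).
  cbv beta. rewrite H3. replace (h p) with (h w - f2 w * (w - p))%C by (rewrite H4; ring). ring. Qed.

Lemma D1c_inv g p : D1c g p -> g p <> 0%C -> D1c (fun w => / g w)%C p.
Proof. intros Hg Hp. pose proof (D1c_ccont _ _ Hg) as Hc.
  destruct Hg as [r1 [Hr1 [f1 [Hf1 H1]]]].
  destruct (Hc (Cmod (g p))) as [d [Hd Hd']]. apply Cmod_pos; auto.
  exists (Rmin r1 d); split. apply Rmin_pos; auto.
  exists (fun w => - f1 w * / (g w * g p))%C; split.
  apply ccont_mult. apply ccont_opp; auto. apply ccont_inv.
  apply ccont_mult; auto. apply ccont_const. apply Cmult_neq_0; auto.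
  intros w Hw.
  assert (Cmod (w - p) < r1) by (eapply Rlt_le_trans; [apply Hw|apply Rmin_l]).
  assert (Cmod (w - p) < d) by (eapply Rlt_le_trans; [apply Hw|apply Rmin_r]).
  specialize (Hd' w H0).
  assert (gw : g w <> 0%C).
  { intro E. rewrite E in Hd'. replace (0 - g p)%C with (- g p)%C in Hd' by ring.
    rewrite Cmod_opp in Hd'. lra. }
  specialize (H1 w H).
  assert (E : (f1 w * (w - p) = g w - g p)%C) by (rewrite H1; ring).
  replace (- f1 w * / (g w * g p) * (w - p))%C with (- (f1 w * (w - p)) * / (g w * g p))%C by ring.
  rewrite E. field. split; auto. Qed.

Lemma D1c_div g h p : D1c g p -> D1c h p -> h p <> 0%C -> D1c (fun w => g w / h w)%C p.
Proof. intros. unfold Cdiv. apply D1c_mult; auto. apply D1c_inv; auto. Qed.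

Lemma RI_plus (f g : R -> R) a b : ex_RInt f a b -> ex_RInt g a b ->
  RInt (fun x => f x + g x) a b = RInt f a b + RInt g a b.
Proof. intros. exact (RInt_plus f g a b H H0). Qed.

Lemma RI_minus (f g : R -> R) a b : ex_RInt f a b -> ex_RInt g a b ->
  RInt (fun x => f x - g x) a b = RInt f a b - RInt g a b.
Proof. intros. exact (RInt_minus f g a b H H0). Qed.

Lemma RI_scal (f : R -> R) a b l : ex_RInt f a b ->
  RInt (fun x => l * f x) a b = l * RInt f a b.
Proof. intros. exact (RInt_scal f a b l H). Qed.

Lemma exRI_plus (f g : R -> R) a b : ex_RInt f a b -> ex_RInt g a b ->
  ex_RInt (fun x => f x + g x) a b.
Proof. intros. exact (ex_RInt_plus f g a b H H0). Qed.

Lemma exRI_minus (f g : R -> R) a b : ex_RInt f a b -> ex_RInt g a b ->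
  ex_RInt (fun x => f x - g x) a b.
Proof. intros. exact (ex_RInt_minus f g a b H H0). Qed.

Lemma exRI_scal (f : R -> R) a b l : ex_RInt f a b ->
  ex_RInt (fun x => l * f x) a b.
Proof. intros. exact (ex_RInt_scal f a b l H). Qed.

Lemma RI_const01 (c : R) : RInt (fun _ => c) 0 1 = c.
Proof. rewrite RInt_const. unfold scal; simpl. unfold mult; simpl. ring. Qed.

Lemma RI_ext01 (f g : R -> R) : (forall x, 0 <= x <= 1 -> f x = g x) -> RInt f 0 1 = RInt g 0 1.
Proof. intros H. apply RInt_ext. intros x. rewrite Rmin_left, Rmax_right by lra. intros; apply H; lra. Qed.

Lemma exRI_ext01 (f g : R -> R) : (forall x, 0 <= x <= 1 -> f x = g x) -> ex_RInt f 0 1 -> ex_RInt g 0 1.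
Proof. intros H. apply ex_RInt_ext. intros x. rewrite Rmin_left, Rmax_right by lra. intros; apply H; lra. Qed.

Definition cint (h : R -> C) : C := (RInt (fun t => fst (h t)) 0 1, RInt (fun t => snd (h t)) 0 1).

Definition cok (h : R -> C) : Prop := ex_RInt (fun t => fst (h t)) 0 1 /\ ex_RInt (fun t => snd (h t)) 0 1.

Lemma cint_ext h1 h2 : (forall t, 0 <= t <= 1 -> h1 t = h2 t) -> cint h1 = cint h2.
Proof. intros H. unfold cint. f_equal; apply RI_ext01; intros; rewrite H; auto. Qed.

Lemma cok_ext h1 h2 : (forall t, 0 <= t <= 1 -> h1 t = h2 t) -> cok h1 -> cok h2.
Proof. intros H [H1 H2]. split; [apply exRI_ext01 with (fun t => fst (h1 t)) | apply exRI_ext01 with (fun t => snd (h1 t))]; auto; intros; rewrite H; auto. Qed.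

Lemma cint_plus h1 h2 : cok h1 -> cok h2 -> cint (fun t => h1 t + h2 t)%C = (cint h1 + cint h2)%C.
Proof. intros [a1 a2] [b1 b2]. unfold cint, Cplus. simpl. f_equal.
  rewrite <- RI_plus; auto. rewrite <- RI_plus; auto. Qed.

Lemma cok_plus h1 h2 : cok h1 -> cok h2 -> cok (fun t => h1 t + h2 t)%C.
Proof. intros [a1 a2] [b1 b2]. split; simpl; apply exRI_plus; auto. Qed.

Lemma cint_scal (c : C) h : cok h -> cint (fun t => c * h t)%C = (c * cint h)%C.
Proof. intros [a1 a2]. unfold cint, Cmult. simpl. f_equal.
  - rewrite RI_minus. rewrite !RI_scal; auto. apply exRI_scal; auto. apply exRI_scal; auto.
  - rewrite RI_plus. rewrite !RI_scal; auto. apply exRI_scal; auto. apply exRI_scal; auto. Qed.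

Lemma cok_scal (c : C) h : cok h -> cok (fun t => c * h t)%C.
Proof. intros [a1 a2]. split; simpl.
  apply exRI_minus; apply exRI_scal; auto. apply exRI_plus; apply exRI_scal; auto. Qed.

Lemma cint_minus h1 h2 : cok h1 -> cok h2 -> cint (fun t => h1 t - h2 t)%C = (cint h1 - cint h2)%C.
Proof. intros. transitivity (cint (fun t => h1 t + (RtoC (-1)) * h2 t)%C).
  apply cint_ext; intros; ring. rewrite cint_plus; auto. rewrite cint_scal; auto. ring.
  apply cok_scal; auto. Qed.

Lemma cok_minus h1 h2 : cok h1 -> cok h2 -> cok (fun t => h1 t - h2 t)%C.
Proof. intros. apply cok_ext with (fun t => h1 t + (RtoC (-1)) * h2 t)%C.
  intros; ring. apply cok_plus; auto. apply cok_scal; auto. Qed.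

Lemma Cmod_cint h M : cok h -> (forall t, 0 <= t <= 1 -> Cmod (h t) <= M) -> Cmod (cint h) <= M.
Proof. intros Hok HM. assert (M0 : 0 <= M) by (eapply Rle_trans; [apply Cmod_ge_0| apply (HM 0); lra]).
  destruct (Ceq_dec (cint h) (RtoC 0)) as [E|E].
  - rewrite E, Cmod_0; auto.
  - set (I := cint h). set (cI := Cconj I).
    assert (HI : 0 < Cmod I) by (apply Cmod_pos; auto).
    assert (Hsq : Cmod I * Cmod I = fst (cI * I)%C).
    { unfold cI, Cconj, Cmod; simpl. rewrite sqrt_sqrt. ring. nra. }
    assert (Hre : fst (cI * I)%C = RInt (fun t => fst (cI * h t)%C) 0 1).
    { unfold I. rewrite <- cint_scal; auto. }
    assert (Hle : RInt (fun t => fst (cI * h t)%C) 0 1 <= RInt (fun _ => Cmod I * M) 0 1).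
    { apply RInt_le. lra. destruct (cok_scal cI h Hok); auto. apply ex_RInt_const.
      intros t Ht. apply Rle_trans with (Rabs (fst (cI * h t)%C)). apply Rle_abs.
      apply Rle_trans with (Cmod (cI * h t)%C). apply Cmod_re_le. rewrite Cmod_mult. unfold cI. rewrite Cmod_conj.
      apply Rmult_le_compat_l. apply Cmod_ge_0. apply HM; lra. }
    rewrite RI_const01 in Hle. rewrite <- Hre, <- Hsq in Hle.
    apply Rmult_le_reg_l with (Cmod I); auto. Qed.

Definition seg (z1 z2 : C) (t : R) : C := (z1 + RtoC t * (z2 - z1))%C.
Definition sint (g : C -> C) (z1 z2 : C) : C := cint (fun t => g (seg z1 z2 t) * (z2 - z1))%C.
Definition sok (g : C -> C) (z1 z2 : C) : Prop := forall t, 0 <= t <= 1 -> ccont g (seg z1 z2 t).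

Lemma seg_fst z1 z2 t : fst (seg z1 z2 t) = fst z1 + t * (fst z2 - fst z1).
Proof. unfold seg; simpl; ring. Qed.
Lemma seg_snd z1 z2 t : snd (seg z1 z2 t) = snd z1 + t * (snd z2 - snd z1).
Proof. unfold seg; simpl; ring. Qed.

Lemma Cmod_seg_diff z1 z2 t s : Cmod (seg z1 z2 t - seg z1 z2 s) = Rabs (t - s) * Cmod (z2 - z1).
Proof. unfold seg. replace (z1 + RtoC t * (z2 - z1) - (z1 + RtoC s * (z2 - z1)))%C
  with (RtoC (t - s) * (z2 - z1))%C. rewrite Cmod_mult, Cmod_R; auto.
  unfold RtoC, Cminus, Cplus, Cmult, Copp; simpl. f_equal; ring. Qed.

Lemma cont_comp_seg (G : C -> C) z1 z2 t0 : ccont G (seg z1 z2 t0) ->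
  continuous (fun t => fst (G (seg z1 z2 t))) t0 /\ continuous (fun t => snd (G (seg z1 z2 t))) t0.
Proof. intros HG. split; apply continuity_pt_filterlim; intros e He;
  destruct (HG e He) as [d [Hd H]];
  exists (d / (Cmod (z2 - z1) + 1)); (split; [apply Rdiv_lt_0_compat; [auto|pose proof (Cmod_ge_0 (z2-z1)); lra]|]);
  intros t [_ Ht]; simpl in Ht; unfold R_dist in Ht; simpl; unfold R_dist;
  (assert (Hc : Cmod (G (seg z1 z2 t) - G (seg z1 z2 t0)) < e);
   [apply H; rewrite Cmod_seg_diff;
    pose proof (Cmod_ge_0 (z2-z1));
    apply Rle_lt_trans with (Rabs (t - t0) * (Cmod (z2 - z1) + 1)); [apply Rmult_le_compat_l; [apply Rabs_pos|lra]|];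
    apply Rlt_le_trans with (d / (Cmod (z2 - z1) + 1) * (Cmod (z2 - z1) + 1));
    [apply Rmult_lt_compat_r; lra| right; field; lra]|]).
  - eapply Rle_lt_trans; [|apply Hc]. eapply Rle_trans; [|apply Cmod_re_le]. simpl. right; f_equal; ring.
  - eapply Rle_lt_trans; [|apply Hc]. eapply Rle_trans; [|apply Cmod_im_le]. simpl. right; f_equal; ring. Qed.

Lemma sok_cok g z1 z2 : sok g z1 z2 -> cok (fun t => g (seg z1 z2 t) * (z2 - z1))%C.
Proof. intros H. assert (Hc : forall t, 0 <= t <= 1 -> ccont (fun w => g w * (z2 - z1))%C (seg z1 z2 t)).
  { intros; apply ccont_mult; auto. apply ccont_const. }
  split; apply (ex_RInt_continuous (V:=R_CompleteNormedModule)); rewrite Rmin_left, Rmax_right by lra; intros t Ht;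
  destruct (cont_comp_seg _ z1 z2 t (Hc t Ht)); auto. Qed.

Lemma sint_plus g1 g2 z1 z2 : sok g1 z1 z2 -> sok g2 z1 z2 ->
  sint (fun w => g1 w + g2 w)%C z1 z2 = (sint g1 z1 z2 + sint g2 z1 z2)%C.
Proof. intros. unfold sint. rewrite <- cint_plus by (apply sok_cok; auto).
  apply cint_ext; intros; ring. Qed.

Lemma sint_minus g1 g2 z1 z2 : sok g1 z1 z2 -> sok g2 z1 z2 ->
  sint (fun w => g1 w - g2 w)%C z1 z2 = (sint g1 z1 z2 - sint g2 z1 z2)%C.
Proof. intros. unfold sint. rewrite <- cint_minus by (apply sok_cok; auto).
  apply cint_ext; intros; ring. Qed.

Lemma sint_scal c g z1 z2 : sok g z1 z2 ->
  sint (fun w => c * g w)%C z1 z2 = (c * sint g z1 z2)%C.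
Proof. intros. unfold sint. rewrite <- cint_scal by (apply sok_cok; auto).
  apply cint_ext; intros; ring. Qed.

Lemma sint_ext g1 g2 z1 z2 : (forall t, 0 <= t <= 1 -> g1 (seg z1 z2 t) = g2 (seg z1 z2 t)) ->
  sint g1 z1 z2 = sint g2 z1 z2.
Proof. intros H. unfold sint. apply cint_ext. intros; rewrite H; auto. Qed.

Lemma sint_ML g z1 z2 M : sok g z1 z2 -> (forall t, 0 <= t <= 1 -> Cmod (g (seg z1 z2 t)) <= M) ->
  Cmod (sint g z1 z2) <= Cmod (z2 - z1) * M.
Proof. intros Hok HM. unfold sint. apply Cmod_cint. apply sok_cok; auto.
  intros t Ht. rewrite Cmod_mult, Rmult_comm. apply Rmult_le_compat_l. apply Cmod_ge_0. auto. Qed.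

Lemma RI_split (F : R -> R) : ex_RInt F 0 1 ->
  RInt F 0 1 = RInt (fun s => / 2 * F (/ 2 * s + 0)) 0 1 + RInt (fun s => / 2 * F (/ 2 * s + / 2)) 0 1.
Proof. intros H.
  assert (H1 : ex_RInt F 0 (/2)) by (apply (ex_RInt_Chasles_1 (V:=R_CompleteNormedModule)) with 1; [lra|auto]).
  assert (H2 : ex_RInt F (/2) 1) by (apply (ex_RInt_Chasles_2 (V:=R_CompleteNormedModule)) with 0; [lra|auto]).
  rewrite <- (RInt_Chasles F 0 (/2) 1 H1 H2).
  pose proof (RInt_comp_lin F (/2) 0 0 1) as E1. pose proof (RInt_comp_lin F (/2) (/2) 0 1) as E2.
  replace (/ 2 * 0 + 0) with 0 in E1 by ring. replace (/ 2 * 1 + 0) with (/2) in E1 by ring.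
  replace (/ 2 * 0 + / 2) with (/2) in E2 by ring. replace (/ 2 * 1 + / 2) with 1 in E2 by field.
  specialize (E1 H1). specialize (E2 H2). simpl in E1, E2. unfold scal in E1, E2; simpl in E1, E2.
  unfold mult in E1, E2; simpl in E1, E2. rewrite E1, E2. reflexivity. Qed.

Definition midp (z1 z2 : C) : C := ((fst z1 + fst z2) / 2, (snd z1 + snd z2) / 2).

Lemma Ceq_comp (z w : C) : fst z = fst w -> snd z = snd w -> z = w.
Proof. destruct z, w; simpl; intros; subst; auto. Qed.

Lemma sint_split g z1 z2 m : sok g z1 z2 -> fst m = (fst z1 + fst z2)/2 -> snd m = (snd z1 + snd z2)/2 ->
  sint g z1 z2 = (sint g z1 m + sint g m z2)%C.
Proof. intros Hok Hm1 Hm2. destruct (sok_cok _ _ _ Hok) as [Ha Hb].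
  unfold sint, cint, Cplus. cbn [fst snd]. f_equal.
  - rewrite (RI_split _ Ha). f_equal; apply RI_ext01; intros t Ht; simpl.
    + rewrite (Ceq_comp (seg z1 z2 (/ 2 * t + 0)) (seg z1 m t)). simpl. rewrite Hm1, Hm2. field.
      rewrite !seg_fst, Hm1; field. rewrite !seg_snd, Hm2; field.
    + rewrite (Ceq_comp (seg z1 z2 (/ 2 * t + / 2)) (seg m z2 t)). simpl. rewrite Hm1, Hm2. field.
      rewrite !seg_fst, Hm1; field. rewrite !seg_snd, Hm2; field.
  - rewrite (RI_split _ Hb). f_equal; apply RI_ext01; intros t Ht; simpl.
    + rewrite (Ceq_comp (seg z1 z2 (/ 2 * t + 0)) (seg z1 m t)). simpl. rewrite Hm1, Hm2. field.
      rewrite !seg_fst, Hm1; field. rewrite !seg_snd, Hm2; field.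
    + rewrite (Ceq_comp (seg z1 z2 (/ 2 * t + / 2)) (seg m z2 t)). simpl. rewrite Hm1, Hm2. field.
      rewrite !seg_fst, Hm1; field. rewrite !seg_snd, Hm2; field. Qed.

Lemma exRI_rev (F : R -> R) : ex_RInt F 0 1 -> ex_RInt (fun s => F (1 - s)) 0 1.
Proof. intros H. assert (H' : ex_RInt F (-1 * 0 + 1) (-1 * 1 + 1)).
  { replace (-1 * 0 + 1) with 1 by ring. replace (-1 * 1 + 1) with 0 by ring.
    apply (ex_RInt_swap (V:=R_CompleteNormedModule)); auto. }
  apply ex_RInt_comp_lin in H'.
  apply ex_RInt_ext with (fun y => (-1) * (scal (-1) (F (-1 * y + 1)))).
  intros; unfold scal; simpl; unfold mult; simpl. replace (-1*x+1) with (1 - x) by ring. ring.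
  apply exRI_scal. exact H'. Qed.

Lemma RI_rev (F : R -> R) : ex_RInt F 0 1 -> RInt (fun s => F (1 - s)) 0 1 = RInt F 0 1.
Proof. intros H. pose proof (RInt_comp_lin F (-1) 1 0 1) as E.
  replace (-1 * 0 + 1) with 1 in E by ring. replace (-1 * 1 + 1) with 0 in E by ring.
  assert (H' : ex_RInt F 1 0) by (apply (ex_RInt_swap (V:=R_CompleteNormedModule)); auto).
  specialize (E H'). 
  rewrite <- (opp_RInt_swap F 0 1 H) in E.
  assert (E2 : RInt (fun y : R => -1 * F (-1 * y + 1)) 0 1 = - RInt F 0 1).
  { exact E. }
  assert (X : ex_RInt (fun y : R => -1 * F (-1 * y + 1)) 0 1).
  { apply (ex_RInt_comp_lin F (-1) 1 0 1). replace (-1 * 0 + 1) with 1 by ring. replace (-1 * 1 + 1) with 0 by ring. auto. }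
  rewrite (RI_ext01 _ (fun y => -1 * (-1 * F (-1 * y + 1)))).
  rewrite (RI_scal (fun y => -1 * F (-1 * y + 1))) by exact X.
  rewrite E2. match goal with |- ?a = ?b => change (@eq R a b) end. ring.
  intros. replace (-1*x+1) with (1 - x) by ring. ring. Qed.

Lemma sint_rev g z1 z2 : sok g z1 z2 -> sint g z2 z1 = (- sint g z1 z2)%C.
Proof. intros Hok. destruct (sok_cok _ _ _ Hok) as [Ha Hb].
  unfold sint, cint, Copp. cbn [fst snd]. f_equal.
  - rewrite <- (RI_rev _ Ha).
    transitivity (RInt (fun s => -1 * fst (g (seg z1 z2 (1-s)) * (z2-z1))%C) 0 1).
    apply RI_ext01; intros t Ht.
    rewrite (Ceq_comp (seg z2 z1 t) (seg z1 z2 (1 - t))). simpl; ring.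
    rewrite !seg_fst; ring. rewrite !seg_snd; ring.
    rewrite RI_scal by exact (exRI_rev _ Ha).
    match goal with |- ?a = ?b => change (@eq R a b) end. ring.
  - rewrite <- (RI_rev _ Hb).
    transitivity (RInt (fun s => -1 * snd (g (seg z1 z2 (1-s)) * (z2-z1))%C) 0 1).
    apply RI_ext01; intros t Ht.
    rewrite (Ceq_comp (seg z2 z1 t) (seg z1 z2 (1 - t))). simpl; ring.
    rewrite !seg_fst; ring. rewrite !seg_snd; ring.
    rewrite RI_scal by exact (exRI_rev _ Hb).
    match goal with |- ?a = ?b => change (@eq R a b) end. ring. Qed.

Definition inR (x1 x2 y1 y2 : R) (z : C) : Prop := x1 <= fst z <= x2 /\ y1 <= snd z <= y2.

Definition rint (g : C -> C) (x1 x2 y1 y2 : R) : C :=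
  (sint g (x1,y1) (x2,y1) + sint g (x2,y1) (x2,y2) + sint g (x2,y2) (x1,y2) + sint g (x1,y2) (x1,y1))%C.

Definition rok (g : C -> C) x1 x2 y1 y2 : Prop := forall z, inR x1 x2 y1 y2 z -> ccont g z.

Lemma seg_in x1 x2 y1 y2 z1 z2 t : inR x1 x2 y1 y2 z1 -> inR x1 x2 y1 y2 z2 -> 0 <= t <= 1 ->
  inR x1 x2 y1 y2 (seg z1 z2 t).
Proof. unfold inR; rewrite seg_fst, seg_snd. intros [[? ?] [? ?]] [[? ?] [? ?]] [? ?].
  repeat split; nra. Qed.

Lemma rok_sok g x1 x2 y1 y2 z1 z2 : rok g x1 x2 y1 y2 -> inR x1 x2 y1 y2 z1 -> inR x1 x2 y1 y2 z2 ->
  sok g z1 z2.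
Proof. intros H H1 H2 t Ht. apply H. apply seg_in; auto. Qed.

Ltac corner := unfold inR; simpl; lra.

Lemma rint_plus g1 g2 x1 x2 y1 y2 : x1 <= x2 -> y1 <= y2 -> rok g1 x1 x2 y1 y2 -> rok g2 x1 x2 y1 y2 ->
  rint (fun w => g1 w + g2 w)%C x1 x2 y1 y2 = (rint g1 x1 x2 y1 y2 + rint g2 x1 x2 y1 y2)%C.
Proof. intros. unfold rint. rewrite !sint_plus; try (eapply rok_sok; eauto; corner). ring. Qed.

Lemma rint_minus g1 g2 x1 x2 y1 y2 : x1 <= x2 -> y1 <= y2 -> rok g1 x1 x2 y1 y2 -> rok g2 x1 x2 y1 y2 ->
  rint (fun w => g1 w - g2 w)%C x1 x2 y1 y2 = (rint g1 x1 x2 y1 y2 - rint g2 x1 x2 y1 y2)%C.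
Proof. intros. unfold rint. rewrite !sint_minus; try (eapply rok_sok; eauto; corner). ring. Qed.

Lemma rint_scal c g x1 x2 y1 y2 : x1 <= x2 -> y1 <= y2 -> rok g x1 x2 y1 y2 ->
  rint (fun w => c * g w)%C x1 x2 y1 y2 = (c * rint g x1 x2 y1 y2)%C.
Proof. intros. unfold rint. rewrite !sint_scal; try (eapply rok_sok; eauto; corner). ring. Qed.

Lemma rint_ext g1 g2 x1 x2 y1 y2 : x1 <= x2 -> y1 <= y2 ->
  (forall z, inR x1 x2 y1 y2 z -> g1 z = g2 z) -> rint g1 x1 x2 y1 y2 = rint g2 x1 x2 y1 y2.
Proof. intros. unfold rint. repeat rewrite (sint_ext g1 g2); auto; intros; apply H1; apply seg_in; auto; corner. Qed.

Lemma rok_plus g1 g2 x1 x2 y1 y2 : rok g1 x1 x2 y1 y2 -> rok g2 x1 x2 y1 y2 -> rok (fun w => g1 w + g2 w)%C x1 x2 y1 y2.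
Proof. intros H1 H2 z Hz. apply ccont_plus; auto. Qed.
Lemma rok_minus g1 g2 x1 x2 y1 y2 : rok g1 x1 x2 y1 y2 -> rok g2 x1 x2 y1 y2 -> rok (fun w => g1 w - g2 w)%C x1 x2 y1 y2.
Proof. intros H1 H2 z Hz. apply ccont_minus; auto. Qed.
Lemma rok_mult g1 g2 x1 x2 y1 y2 : rok g1 x1 x2 y1 y2 -> rok g2 x1 x2 y1 y2 -> rok (fun w => g1 w * g2 w)%C x1 x2 y1 y2.
Proof. intros H1 H2 z Hz. apply ccont_mult; auto. Qed.
Lemma rok_sub x1 x2 y1 y2 x1' x2' y1' y2' g : x1 <= x1' -> x2' <= x2 -> y1 <= y1' -> y2' <= y2 ->
  rok g x1 x2 y1 y2 -> rok g x1' x2' y1' y2'.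
Proof. intros ? ? ? ? H z Hz. apply H. unfold inR in *; lra. Qed.

Lemma rint_quarter g x1 x2 y1 y2 : x1 <= x2 -> y1 <= y2 -> rok g x1 x2 y1 y2 ->
  let mx := (x1 + x2) / 2 in let my := (y1 + y2) / 2 in
  rint g x1 x2 y1 y2 = (rint g x1 mx y1 my + rint g mx x2 y1 my + rint g mx x2 my y2 + rint g x1 mx my y2)%C.
Proof. intros Hx Hy Hok mx my.
  assert (Hmx : x1 <= mx <= x2) by (unfold mx; lra). assert (Hmy : y1 <= my <= y2) by (unfold my; lra).
  unfold rint.
  rewrite (sint_split g (x1,y1) (x2,y1) (mx,y1)) by (try (eapply rok_sok; eauto; corner); simpl; unfold mx; lra).
  rewrite (sint_split g (x2,y1) (x2,y2) (x2,my)) by (try (eapply rok_sok; eauto; corner); simpl; unfold my; lra).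
  rewrite (sint_split g (x2,y2) (x1,y2) (mx,y2)) by (try (eapply rok_sok; eauto; corner); simpl; unfold mx; lra).
  rewrite (sint_split g (x1,y2) (x1,y1) (x1,my)) by (try (eapply rok_sok; eauto; corner); simpl; unfold my; lra).
  rewrite (sint_rev g (mx,my) (mx,y1)) by (eapply rok_sok; eauto; corner).
  rewrite (sint_rev g (x1,my) (mx,my)) by (eapply rok_sok; eauto; corner).
  rewrite (sint_rev g (mx,my) (x2,my)) by (eapply rok_sok; eauto; corner).
  rewrite (sint_rev g (mx,y2) (mx,my)) by (eapply rok_sok; eauto; corner).
  ring. Qed.

Lemma RI_affine (a b : R) : RInt (fun t => a + t * b) 0 1 = a + b / 2.
Proof. apply is_RInt_unique.
  assert (H : is_RInt (fun t => a + t * b) 0 1 (minus ((fun t => a * t + t * t * b / 2) 1) ((fun t => a * t + t * t * b / 2) 0))).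
  { apply (is_RInt_derive (V:=R_CompleteNormedModule) (fun t => a * t + t * t * b / 2)).
    - intros x _. auto_derive; auto. match goal with |- ?u = ?v => change (@eq R u v) end; field.
    - intros x _. apply continuity_pt_filterlim. apply continuity_pt_plus. apply continuity_pt_const; intros ? ?; auto.
      apply continuity_pt_mult. apply derivable_continuous_pt. apply derivable_pt_id. apply continuity_pt_const; intros ? ?; auto. }
  replace (a + b / 2) with (minus ((fun t => a * t + t * t * b / 2) 1) ((fun t => a * t + t * t * b / 2) 0)).
  exact H. unfold minus, plus, opp; simpl. field. Qed.

Lemma pair_half (A B : C) : (fst A + fst B / 2, snd A + snd B / 2) = (A + B / RtoC 2)%C.
Proof. destruct A as [a1 a2], B as [b1 b2]. unfold Cplus, Cdiv, Cmult, Cinv, RtoC; simpl. f_equal; field. Qed.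

Lemma sint_affine c0 c1 z1 z2 : sint (fun w => c0 + c1 * w)%C z1 z2 =
  (c0 * (z2 - z1) + c1 * (z2 * z2 - z1 * z1) / RtoC 2)%C.
Proof. set (A := ((c0 + c1 * z1) * (z2 - z1))%C). set (B := (c1 * (z2 - z1) * (z2 - z1))%C).
  unfold sint. rewrite (cint_ext _ (fun t => A + RtoC t * B)%C).
  - unfold cint. rewrite (RI_ext01 _ (fun t => fst A + t * fst B)), (RI_ext01 (fun t => snd _) (fun t => snd A + t * snd B)).
    rewrite !RI_affine. rewrite pair_half. unfold A, B. field.
    intros; simpl; ring. intros; simpl; ring.
  - intros t _. unfold seg, A, B. ring. Qed.

Lemma rint_affine c0 c1 x1 x2 y1 y2 : rint (fun w => c0 + c1 * w)%C x1 x2 y1 y2 = RtoC 0.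
Proof. unfold rint. rewrite !sint_affine. field. Qed.

Lemma Cmod_hor a b y : Cmod ((a, y) - (b, y))%C = Rabs (a - b).
Proof. rewrite <- Cmod_R. f_equal. unfold Cminus, Cplus, Copp, RtoC; simpl. f_equal; ring. Qed.
Lemma Cmod_ver a b x : Cmod ((x, a) - (x, b))%C = Rabs (a - b).
Proof. unfold Cmod; simpl. rewrite <- sqrt_Rsqr_abs. f_equal. unfold Rsqr; ring. Qed.

Lemma rint_ML g x1 x2 y1 y2 M : x1 <= x2 -> y1 <= y2 -> rok g x1 x2 y1 y2 ->
  (forall z, inR x1 x2 y1 y2 z -> Cmod (g z) <= M) ->
  Cmod (rint g x1 x2 y1 y2) <= 2 * ((x2 - x1) + (y2 - y1)) * M.
Proof. intros Hx Hy Hok HM.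
  assert (M0 : 0 <= M) by (eapply Rle_trans; [apply Cmod_ge_0|apply (HM (x1,y1)); corner]).
  unfold rint. eapply Rle_trans. apply Cmod_triangle. eapply Rle_trans. apply Rplus_le_compat_r. apply Cmod_tri3.
  assert (E : forall z1 z2, inR x1 x2 y1 y2 z1 -> inR x1 x2 y1 y2 z2 -> Cmod (sint g z1 z2) <= Cmod (z2 - z1) * M).
  { intros. apply sint_ML. eapply rok_sok; eauto. intros; apply HM. apply seg_in; auto. }
  pose proof (E (x1,y1) (x2,y1) ltac:(corner) ltac:(corner)).
  pose proof (E (x2,y1) (x2,y2) ltac:(corner) ltac:(corner)).
  pose proof (E (x2,y2) (x1,y2) ltac:(corner) ltac:(corner)).
  pose proof (E (x1,y2) (x1,y1) ltac:(corner) ltac:(corner)).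
  rewrite Cmod_hor in H, H1. rewrite Cmod_ver in H0, H2.
  rewrite Rabs_right in H by lra. rewrite Rabs_right in H0 by lra.
  rewrite Rabs_left1 in H1 by lra. rewrite Rabs_left1 in H2 by lra. nra. Qed.

Record rect := mkR { rx1 : R; rx2 : R; ry1 : R; ry2 : R }.

Definition rI (g : C -> C) (r : rect) : C := rint g (rx1 r) (rx2 r) (ry1 r) (ry2 r).
Definition q1 r := mkR (rx1 r) ((rx1 r + rx2 r)/2) (ry1 r) ((ry1 r + ry2 r)/2).
Definition q2 r := mkR ((rx1 r + rx2 r)/2) (rx2 r) (ry1 r) ((ry1 r + ry2 r)/2).
Definition q3 r := mkR ((rx1 r + rx2 r)/2) (rx2 r) ((ry1 r + ry2 r)/2) (ry2 r).
Definition q4 r := mkR (rx1 r) ((rx1 r + rx2 r)/2) ((ry1 r + ry2 r)/2) (ry2 r).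

Definition pick2 g (a b : rect) : rect := if Rle_dec (Cmod (rI g b)) (Cmod (rI g a)) then a else b.
Definition nextR g r := pick2 g (pick2 g (q1 r) (q2 r)) (pick2 g (q3 r) (q4 r)).

Lemma pick2_ge g a b : Cmod (rI g a) <= Cmod (rI g (pick2 g a b)) /\ Cmod (rI g b) <= Cmod (rI g (pick2 g a b)).
Proof. unfold pick2. destruct (Rle_dec _ _); lra. Qed.

Lemma pick2_cases g a b : pick2 g a b = a \/ pick2 g a b = b.
Proof. unfold pick2. destruct (Rle_dec _ _); auto. Qed.

Lemma nextR_cases g r : nextR g r = q1 r \/ nextR g r = q2 r \/ nextR g r = q3 r \/ nextR g r = q4 r.
Proof. unfold nextR. destruct (pick2_cases g (pick2 g (q1 r) (q2 r)) (pick2 g (q3 r) (q4 r))) as [E|E]; rewrite E.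
  destruct (pick2_cases g (q1 r) (q2 r)) as [E'|E']; rewrite E'; auto.
  destruct (pick2_cases g (q3 r) (q4 r)) as [E'|E']; rewrite E'; auto. Qed.

Lemma nextR_ge g r : rx1 r <= rx2 r -> ry1 r <= ry2 r -> rok g (rx1 r) (rx2 r) (ry1 r) (ry2 r) ->
  Cmod (rI g r) <= 4 * Cmod (rI g (nextR g r)).
Proof. intros Hx Hy Hok. unfold rI at 1. rewrite (rint_quarter g _ _ _ _ Hx Hy Hok). cbv zeta.
  unfold nextR.
  destruct (pick2_ge g (q1 r) (q2 r)) as [A1 A2]. destruct (pick2_ge g (q3 r) (q4 r)) as [A3 A4].
  destruct (pick2_ge g (pick2 g (q1 r) (q2 r)) (pick2 g (q3 r) (q4 r))) as [B1 B2].
  unfold rI, q1, q2, q3, q4 in *; simpl in *.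
  eapply Rle_trans. apply Cmod_triangle. eapply Rle_trans. apply Rplus_le_compat_r. apply Cmod_tri3. lra. Qed.

Fixpoint seqR g r0 (k : nat) : rect := match k with O => r0 | S k => nextR g (seqR g r0 k) end.

Section Gour.
Variable g : C -> C.
Variable r0 : rect.
Hypothesis Hx0 : rx1 r0 < rx2 r0.
Hypothesis Hy0 : ry1 r0 < ry2 r0.
Hypothesis HD : forall z, inR (rx1 r0) (rx2 r0) (ry1 r0) (ry2 r0) z -> D1c g z.

Let W := rx2 r0 - rx1 r0.
Let H := ry2 r0 - ry1 r0.

Lemma inv_step r : rx1 r <= rx2 r -> ry1 r <= ry2 r ->
   rx1 r <= rx1 (nextR g r) /\ rx1 (nextR g r) <= rx2 (nextR g r) /\ rx2 (nextR g r) <= rx2 r /\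
   ry1 r <= ry1 (nextR g r) /\ ry1 (nextR g r) <= ry2 (nextR g r) /\ ry2 (nextR g r) <= ry2 r /\
   (rx2 (nextR g r) - rx1 (nextR g r)) * 2 = rx2 r - rx1 r /\
   (ry2 (nextR g r) - ry1 (nextR g r)) * 2 = ry2 r - ry1 r.
Proof. intros. destruct (nextR_cases g r) as [E|[E|[E|E]]]; rewrite E; unfold q1,q2,q3,q4; simpl;
  repeat split; lra. Qed.

Let s k := seqR g r0 k.

Lemma inv_all k : rx1 r0 <= rx1 (s k) /\ rx1 (s k) <= rx2 (s k) /\ rx2 (s k) <= rx2 r0 /\
   ry1 r0 <= ry1 (s k) /\ ry1 (s k) <= ry2 (s k) /\ ry2 (s k) <= ry2 r0 /\
   (rx2 (s k) - rx1 (s k)) * 2 ^ k = W /\ (ry2 (s k) - ry1 (s k)) * 2 ^ k = H /\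
   Cmod (rI g r0) <= (2 ^ k * 2 ^ k) * Cmod (rI g (s k)).
Proof. induction k as [|k IH].
  - unfold s, W, H; simpl. repeat split; lra.
  - destruct IH as [A1 [A2 [A3 [A4 [A5 [A6 [A7 [A8 A9]]]]]]]].
    assert (Hok : rok g (rx1 (s k)) (rx2 (s k)) (ry1 (s k)) (ry2 (s k))).
    { intros z Hz. apply D1c_ccont. apply HD. unfold inR in *; lra. }
    pose proof (nextR_ge g (s k) A2 A5 Hok) as G.
    destruct (inv_step (s k) A2 A5) as [B1 [B2 [B3 [B4 [B5 [B6 [B7 B8]]]]]]].
    change (s (S k)) with (nextR g (s k)). simpl pow.
    repeat split; try lra.
    + rewrite <- A7, <- B7. ring.
    + rewrite <- A8, <- B8. ring.
    + eapply Rle_trans. apply A9. assert (0 <= 2^k*2^k) by (apply Rmult_le_pos; apply pow_le; lra).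
      replace (2 * 2 ^ k * (2 * 2 ^ k)) with ((2 ^ k * 2 ^ k) * 4) by ring. nra. Qed.

Lemma mono_x1 n m : (n <= m)%nat -> rx1 (s n) <= rx1 (s m).
Proof. induction 1. lra. eapply Rle_trans. apply IHle.
  destruct (inv_all m) as [_ [A2 [_ [_ [A5 _]]]]]. destruct (inv_step (s m) A2 A5); auto. Qed.
Lemma mono_x2 n m : (n <= m)%nat -> rx2 (s m) <= rx2 (s n).
Proof. induction 1. lra. eapply Rle_trans; [|apply IHle].
  destruct (inv_all m) as [_ [A2 [_ [_ [A5 _]]]]]. destruct (inv_step (s m) A2 A5) as [_ [_ [B _]]]; auto. Qed.
Lemma mono_y1 n m : (n <= m)%nat -> ry1 (s n) <= ry1 (s m).
Proof. induction 1. lra. eapply Rle_trans. apply IHle.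
  destruct (inv_all m) as [_ [A2 [_ [_ [A5 _]]]]]. destruct (inv_step (s m) A2 A5) as [_ [_ [_ [B _]]]]; auto. Qed.
Lemma mono_y2 n m : (n <= m)%nat -> ry2 (s m) <= ry2 (s n).
Proof. induction 1. lra. eapply Rle_trans; [|apply IHle].
  destruct (inv_all m) as [_ [A2 [_ [_ [A5 _]]]]]. destruct (inv_step (s m) A2 A5) as [_ [_ [_ [_ [_ [B _]]]]]]; auto. Qed.

Lemma x1_le_x2 n k : rx1 (s n) <= rx2 (s k).
Proof. destruct (Compare_dec.le_lt_dec n k) as [h|h].
  - eapply Rle_trans. apply (mono_x1 n k h). apply (inv_all k).
  - eapply Rle_trans. apply (inv_all n). apply mono_x2. lia. Qed.
Lemma y1_le_y2 n k : ry1 (s n) <= ry2 (s k).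
Proof. destruct (Compare_dec.le_lt_dec n k) as [h|h].
  - eapply Rle_trans. apply (mono_y1 n k h). apply (inv_all k).
  - eapply Rle_trans. apply (inv_all n). apply mono_y2. lia. Qed.

Lemma cv_const (c : R) : Un_cv (fun _ => c) c.
Proof. intros e He; exists O; intros; unfold R_dist; rewrite Rminus_diag, Rabs_R0; auto. Qed.

Lemma limit_pt : exists p : C, forall k, inR (rx1 (s k)) (rx2 (s k)) (ry1 (s k)) (ry2 (s k)) p.
Proof.
  assert (Gx : Un_growing (fun k => rx1 (s k))). { intros n. apply mono_x1. lia. }
  assert (Gy : Un_growing (fun k => ry1 (s k))). { intros n. apply mono_y1. lia. }
  destruct (growing_cv _ Gx) as [px Hpx]. { exists (rx2 r0). intros x [k Hk]; subst. destruct (inv_all k) as [? [? [? _]]]; lra. }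
  destruct (growing_cv _ Gy) as [py Hpy]. { exists (ry2 r0). intros x [k Hk]; subst. destruct (inv_all k) as [_ [_ [_ [? [? [? _]]]]]]; lra. }
  exists (px, py). intros k. unfold inR; simpl. repeat split.
  - apply (growing_ineq _ _ Gx Hpx).
  - apply (Rle_cv_lim (Un := fun n => rx1 (s n)) (Vn := fun _ => rx2 (s k))); auto. intros; apply x1_le_x2. apply cv_const.
  - apply (growing_ineq _ _ Gy Hpy).
  - apply (Rle_cv_lim (Un := fun n => ry1 (s n)) (Vn := fun _ => ry2 (s k))); auto. intros; apply y1_le_y2. apply cv_const.
Qed.

Lemma pow2_ge_INR k : INR k <= 2 ^ k.
Proof. induction k. simpl; lra. rewrite S_INR. simpl. pose proof (pow_le 2 k). assert (1 <= 2 ^ k) by (apply pow_R1_Rle; lra). lra. Qed.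

Theorem goursat_rect : rI g r0 = RtoC 0.
Proof.
  destruct (Ceq_dec (rI g r0) (RtoC 0)) as [E|E]; auto. exfalso.
  set (c := Cmod (rI g r0)). assert (Hc : 0 < c) by (apply Cmod_pos; auto).
  destruct limit_pt as [p Hp].
  assert (Hp0 : inR (rx1 r0) (rx2 r0) (ry1 r0) (ry2 r0) p).
  { specialize (Hp O). exact Hp. }
  destruct (HD p Hp0) as [r [Hr [phi [Hphi Heq]]]].
  assert (HWH : 0 < W + H) by (unfold W, H; lra).
  set (eps := c / (8 * (W + H) * (W + H))).
  assert (Heps : 0 < eps) by (unfold eps; apply Rdiv_lt_0_compat; [lra| nra]).
  destruct (Hphi eps Heps) as [del [Hdel Hd]].
  set (d := Rmin r del). assert (Hd0 : 0 < d) by (apply Rmin_pos; auto).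
  destruct (INR_unbounded ((W + H) / d)) as [k Hk].
  pose proof (pow2_ge_INR k) as Hk2.
  assert (Hsmall : (W + H) < d * 2 ^ k).
  { apply Rlt_le_trans with (d * INR k). apply Rmult_lt_reg_l with (/ d). apply Rinv_0_lt_compat; auto.
    rewrite <- Rmult_assoc, Rinv_l, Rmult_1_l by lra. rewrite Rmult_comm. exact Hk.
    apply Rmult_le_compat_l; lra. }
  destruct (inv_all k) as [A1 [A2 [A3 [A4 [A5 [A6 [A7 [A8 A9]]]]]]]].
  set (x1 := rx1 (s k)) in *. set (x2 := rx2 (s k)) in *. set (y1 := ry1 (s k)) in *. set (y2 := ry2 (s k)) in *.
  set (Wk := x2 - x1) in *. set (Hk' := y2 - y1) in *.
  assert (P2k : 0 < 2 ^ k) by (apply pow_lt; lra).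
  assert (Hdiam : forall z, inR x1 x2 y1 y2 z -> Cmod (z - p) <= Wk + Hk').
  { intros z Hz. eapply Rle_trans. apply Cmod_le_sum. specialize (Hp k). fold x1 x2 y1 y2 in Hp.
    unfold inR in *. simpl. unfold Wk, Hk'. apply Rplus_le_compat; apply Rabs_le; lra. }
  assert (HWk : (Wk + Hk') * 2 ^ k = W + H) by (rewrite <- A7, <- A8; ring).
  assert (Hlt : Wk + Hk' < d).
  { apply Rmult_lt_reg_r with (2 ^ k); auto. rewrite HWk. lra. }
  set (c0 := (g p - phi p * p)%C). set (c1 := phi p).
  set (h := fun w => (g w - (c0 + c1 * w))%C).
  assert (Hokg : rok g x1 x2 y1 y2).
  { intros z Hz. apply D1c_ccont. apply HD. unfold inR in *; lra. }
  assert (Hoka : rok (fun w => c0 + c1 * w)%C x1 x2 y1 y2).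
  { intros z Hz. apply ccont_plus. apply ccont_const. apply ccont_mult. apply ccont_const. apply ccont_id. }
  assert (Eh : rI g (s k) = rint h x1 x2 y1 y2).
  { unfold h. rewrite rint_minus; auto. rewrite rint_affine. unfold rI. fold x1 x2 y1 y2. ring. }
  assert (Bh : forall z, inR x1 x2 y1 y2 z -> Cmod (h z) <= eps * (Wk + Hk')).
  { intros z Hz. pose proof (Hdiam z Hz) as Dz.
    assert (Cmod (z - p) < r) by (eapply Rle_lt_trans; [apply Dz| eapply Rlt_le_trans; [apply Hlt| apply Rmin_l]]).
    assert (Cmod (z - p) < del) by (eapply Rle_lt_trans; [apply Dz| eapply Rlt_le_trans; [apply Hlt| apply Rmin_r]]).
    unfold h. rewrite (Heq z) by auto.
    replace (g p + phi z * (z - p) - (c0 + c1 * z))%C with ((phi z - phi p) * (z - p))%C by (unfold c0, c1; ring).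
    rewrite Cmod_mult. apply Rle_trans with (eps * Cmod (z - p)).
    apply Rmult_le_compat_r. apply Cmod_ge_0. left; apply Hd; auto.
    apply Rmult_le_compat_l; lra. }
  pose proof (rint_ML h x1 x2 y1 y2 (eps * (Wk + Hk')) A2 A5 (rok_minus _ _ _ _ _ _ Hokg Hoka) Bh) as ML.
  rewrite <- Eh in ML. fold Wk Hk' in ML.
  assert (Key : c <= (2 ^ k * 2 ^ k) * (2 * (Wk + Hk') * (eps * (Wk + Hk')))).
  { eapply Rle_trans. apply A9. apply Rmult_le_compat_l. apply Rmult_le_pos; lra. exact ML. }
  replace ((2 ^ k * 2 ^ k) * (2 * (Wk + Hk') * (eps * (Wk + Hk')))) with (2 * eps * (((Wk + Hk') * 2 ^ k) * ((Wk + Hk') * 2 ^ k))) in Key by ring.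
  rewrite HWk in Key. unfold eps in Key.
  replace (2 * (c / (8 * (W + H) * (W + H))) * ((W + H) * (W + H))) with (c / 4) in Key by (field; lra).
  lra. Qed.

End Gour.

Theorem goursat g x1 x2 y1 y2 : x1 < x2 -> y1 < y2 ->
  (forall z, inR x1 x2 y1 y2 z -> D1c g z) -> rint g x1 x2 y1 y2 = RtoC 0.
Proof. intros. exact (goursat_rect g (mkR x1 x2 y1 y2) H H0 H1). Qed.

Ltac Rfix := match goal with |- ?u = ?v => change (@eq R u v) end.

Definition onB x1 x2 y1 y2 (z : C) : Prop :=
  inR x1 x2 y1 y2 z /\ (fst z = x1 \/ fst z = x2 \/ snd z = y1 \/ snd z = y2).
Definition bok (g : C -> C) x1 x2 y1 y2 : Prop := forall z, onB x1 x2 y1 y2 z -> ccont g z.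

Lemma edges_onB x1 x2 y1 y2 t : x1 <= x2 -> y1 <= y2 -> 0 <= t <= 1 ->
  onB x1 x2 y1 y2 (seg (x1,y1) (x2,y1) t) /\ onB x1 x2 y1 y2 (seg (x2,y1) (x2,y2) t) /\
  onB x1 x2 y1 y2 (seg (x2,y2) (x1,y2) t) /\ onB x1 x2 y1 y2 (seg (x1,y2) (x1,y1) t).
Proof. intros. unfold onB, inR; rewrite !seg_fst, !seg_snd; simpl. repeat split; try nra.
  all: first [ left; ring | right; left; ring | right; right; left; ring | right; right; right; ring ]. Qed.

Lemma rok_bok g x1 x2 y1 y2 : rok g x1 x2 y1 y2 -> bok g x1 x2 y1 y2.
Proof. intros H z [Hz _]. auto. Qed.

Ltac edge_sok := intros ? ?; match goal with H : bok _ _ _ _ _ |- _ => apply H end;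
  match goal with |- onB ?x1 ?x2 ?y1 ?y2 _ =>
  edestruct (edges_onB x1 x2 y1 y2) as [? [? [? ?]]]; [ | | eassumption | ]; eauto end.

Lemma bok_edges g x1 x2 y1 y2 : x1 <= x2 -> y1 <= y2 -> bok g x1 x2 y1 y2 ->
  sok g (x1,y1) (x2,y1) /\ sok g (x2,y1) (x2,y2) /\ sok g (x2,y2) (x1,y2) /\ sok g (x1,y2) (x1,y1).
Proof. intros Hx Hy H. repeat split; intros t Ht; apply H;
  destruct (edges_onB x1 x2 y1 y2 t Hx Hy Ht) as [? [? [? ?]]]; auto. Qed.

Lemma rintB_plus g1 g2 x1 x2 y1 y2 : x1 <= x2 -> y1 <= y2 -> bok g1 x1 x2 y1 y2 -> bok g2 x1 x2 y1 y2 ->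
  rint (fun w => g1 w + g2 w)%C x1 x2 y1 y2 = (rint g1 x1 x2 y1 y2 + rint g2 x1 x2 y1 y2)%C.
Proof. intros Hx Hy H1 H2. destruct (bok_edges _ _ _ _ _ Hx Hy H1) as [A1 [A2 [A3 A4]]].
  destruct (bok_edges _ _ _ _ _ Hx Hy H2) as [B1 [B2 [B3 B4]]].
  unfold rint. rewrite !sint_plus; auto. ring. Qed.

Lemma rintB_minus g1 g2 x1 x2 y1 y2 : x1 <= x2 -> y1 <= y2 -> bok g1 x1 x2 y1 y2 -> bok g2 x1 x2 y1 y2 ->
  rint (fun w => g1 w - g2 w)%C x1 x2 y1 y2 = (rint g1 x1 x2 y1 y2 - rint g2 x1 x2 y1 y2)%C.
Proof. intros Hx Hy H1 H2. destruct (bok_edges _ _ _ _ _ Hx Hy H1) as [A1 [A2 [A3 A4]]].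
  destruct (bok_edges _ _ _ _ _ Hx Hy H2) as [B1 [B2 [B3 B4]]].
  unfold rint. rewrite !sint_minus; auto. ring. Qed.

Lemma rintB_scal c g x1 x2 y1 y2 : x1 <= x2 -> y1 <= y2 -> bok g x1 x2 y1 y2 ->
  rint (fun w => c * g w)%C x1 x2 y1 y2 = (c * rint g x1 x2 y1 y2)%C.
Proof. intros Hx Hy H1. destruct (bok_edges _ _ _ _ _ Hx Hy H1) as [A1 [A2 [A3 A4]]].
  unfold rint. rewrite !sint_scal; auto. ring. Qed.

Lemma rintB_ext g1 g2 x1 x2 y1 y2 : x1 <= x2 -> y1 <= y2 ->
  (forall z, onB x1 x2 y1 y2 z -> g1 z = g2 z) -> rint g1 x1 x2 y1 y2 = rint g2 x1 x2 y1 y2.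
Proof. intros Hx Hy H. unfold rint.
  repeat rewrite (sint_ext g1 g2); auto; intros t Ht; apply H;
  destruct (edges_onB x1 x2 y1 y2 t Hx Hy Ht) as [? [? [? ?]]]; auto. Qed.

Lemma rintB_ML g x1 x2 y1 y2 M : x1 <= x2 -> y1 <= y2 -> bok g x1 x2 y1 y2 ->
  (forall z, onB x1 x2 y1 y2 z -> Cmod (g z) <= M) ->
  Cmod (rint g x1 x2 y1 y2) <= 2 * ((x2 - x1) + (y2 - y1)) * M.
Proof. intros Hx Hy Hok HM.
  assert (M0 : 0 <= M). { eapply Rle_trans; [apply Cmod_ge_0|apply (HM (x1,y1))]. unfold onB, inR; simpl; lra. }
  destruct (bok_edges _ _ _ _ _ Hx Hy Hok) as [A1 [A2 [A3 A4]]].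
  unfold rint. eapply Rle_trans. apply Cmod_triangle. eapply Rle_trans. apply Rplus_le_compat_r. apply Cmod_tri3.
  pose proof (sint_ML g (x1,y1) (x2,y1) M A1) as H.
  pose proof (sint_ML g (x2,y1) (x2,y2) M A2) as H0.
  pose proof (sint_ML g (x2,y2) (x1,y2) M A3) as H1.
  pose proof (sint_ML g (x1,y2) (x1,y1) M A4) as H2.
  rewrite Cmod_hor in H, H1. rewrite Cmod_ver in H0, H2.
  assert (E : forall t, 0 <= t <= 1 -> Cmod (g (seg (x1,y1) (x2,y1) t)) <= M /\ Cmod (g (seg (x2,y1) (x2,y2) t)) <= M /\
     Cmod (g (seg (x2,y2) (x1,y2) t)) <= M /\ Cmod (g (seg (x1,y2) (x1,y1) t)) <= M).
  { intros t Ht. destruct (edges_onB x1 x2 y1 y2 t Hx Hy Ht) as [? [? [? ?]]]. repeat split; apply HM; auto. }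
  specialize (H (fun t Ht => proj1 (E t Ht))). specialize (H0 (fun t Ht => proj1 (proj2 (E t Ht)))).
  specialize (H1 (fun t Ht => proj1 (proj2 (proj2 (E t Ht))))). specialize (H2 (fun t Ht => proj2 (proj2 (proj2 (E t Ht))))).
  rewrite Rabs_right in H by lra. rewrite Rabs_right in H0 by lra.
  rewrite Rabs_left1 in H1 by lra. rewrite Rabs_left1 in H2 by lra. nra. Qed.

Ltac possq := match goal with
 | |- _ /\ _ => split; possq
 | |- _ <> 0 => apply Rgt_not_eq; possq
 | |- ?a > ?b => change (b < a); possq
 | |- 0 < ?x * (?x * 1) + ?y * (?y * 1) => pose proof (Rle_0_sqr x); pose proof (Rle_0_sqr y); unfold Rsqr in *; nra
 | |- 0 < ?x ^ 2 + ?y ^ 2 => pose proof (pow2_ge_0 x); pose proof (pow2_ge_0 y); nra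
 | |- ?x * (?x * 1) + ?y * (?y * 1) > 0 => pose proof (Rle_0_sqr x); pose proof (Rle_0_sqr y); unfold Rsqr in *; nra
 | |- 0 < ?x * ?x + ?y * ?y => pose proof (Rle_0_sqr x); pose proof (Rle_0_sqr y); unfold Rsqr in *; nra
 | |- ?x ^ 2 + ?y ^ 2 > 0 => pose proof (pow2_ge_0 x); pose proof (pow2_ge_0 y); nra
 | _ => nra end.

Lemma is_RInt_01 (F f : R -> R) : (forall t, 0 <= t <= 1 -> is_derive F t (f t)) ->
  (forall t, 0 <= t <= 1 -> continuous f t) -> RInt f 0 1 = F 1 - F 0.
Proof. intros H1 H2. apply is_RInt_unique.
  apply (is_RInt_derive (V:=R_CompleteNormedModule) F f); rewrite Rmin_left, Rmax_right by lra; auto. Qed.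

Lemma sint_inv_hor u0 u1 v px py : v - py <> 0 ->
  sint (fun w => / (w - (px, py)))%C (u0, v) (u1, v) =
  ((ln ((u1 - px) ^ 2 + (v - py) ^ 2) - ln ((u0 - px) ^ 2 + (v - py) ^ 2)) / 2,
   - (atan ((u1 - px) / (v - py)) - atan ((u0 - px) / (v - py)))).
Proof. intros Hb. set (b := v - py) in *. assert (Hb2 : 0 < b ^ 2) by (apply pow2_gt_0; auto).
  unfold sint, cint. f_equal.
  - rewrite (RI_ext01 _ (fun t => (u1 - u0) * (u0 + t * (u1 - u0) - px) / ((u0 + t * (u1 - u0) - px) ^ 2 + b ^ 2))).
    rewrite (is_RInt_01 (fun t => ln ((u0 + t * (u1 - u0) - px) ^ 2 + b ^ 2) / 2)).
    replace (u0 + 1 * (u1 - u0) - px) with (u1 - px) by ring. replace (u0 + 0 * (u1 - u0) - px) with (u0 - px) by ring.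
    unfold b; Rfix; field.
    + intros t _. auto_derive. possq. Rfix. field. possq.
    + intros t _. apply (ex_derive_continuous (K:=R_AbsRing) (V:=R_NormedModule)). auto_derive. possq.
    + intros t _. unfold seg, Cinv, Cmult, Cminus, Cplus, Copp, RtoC; simpl. unfold b. field. unfold b in Hb2. possq.
  - rewrite (RI_ext01 _ (fun t => - (u1 - u0) * b / ((u0 + t * (u1 - u0) - px) ^ 2 + b ^ 2))).
    rewrite (is_RInt_01 (fun t => - atan ((u0 + t * (u1 - u0) - px) / b))).
    replace (u0 + 1 * (u1 - u0) - px) with (u1 - px) by ring. replace (u0 + 0 * (u1 - u0) - px) with (u0 - px) by ring.
    unfold b; Rfix; ring.
    + intros t _. auto_derive. auto. Rfix. field. possq.
    + intros t _. apply (ex_derive_continuous (K:=R_AbsRing) (V:=R_NormedModule)). auto_derive. possq.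
    + intros t _. unfold seg, Cinv, Cmult, Cminus, Cplus, Copp, RtoC; simpl. unfold b. field. unfold b in Hb2. possq.
Qed.

Lemma sint_inv_ver v0 v1 u px py : u - px <> 0 ->
  sint (fun w => / (w - (px, py)))%C (u, v0) (u, v1) =
  ((ln ((u - px) ^ 2 + (v1 - py) ^ 2) - ln ((u - px) ^ 2 + (v0 - py) ^ 2)) / 2,
   atan ((v1 - py) / (u - px)) - atan ((v0 - py) / (u - px))).
Proof. intros Ha. set (a := u - px) in *. assert (Ha2 : 0 < a ^ 2) by (apply pow2_gt_0; auto).
  unfold sint, cint. f_equal.
  - rewrite (RI_ext01 _ (fun t => (v1 - v0) * (v0 + t * (v1 - v0) - py) / (a ^ 2 + (v0 + t * (v1 - v0) - py) ^ 2))).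
    rewrite (is_RInt_01 (fun t => ln (a ^ 2 + (v0 + t * (v1 - v0) - py) ^ 2) / 2)).
    replace (v0 + 1 * (v1 - v0) - py) with (v1 - py) by ring. replace (v0 + 0 * (v1 - v0) - py) with (v0 - py) by ring.
    unfold a; Rfix; field.
    + intros t _. auto_derive. possq. Rfix. field. possq.
    + intros t _. apply (ex_derive_continuous (K:=R_AbsRing) (V:=R_NormedModule)). auto_derive. possq.
    + intros t _. unfold seg, Cinv, Cmult, Cminus, Cplus, Copp, RtoC; simpl. unfold a. field. unfold a in Ha2. possq.
  - rewrite (RI_ext01 _ (fun t => (v1 - v0) * a / (a ^ 2 + (v0 + t * (v1 - v0) - py) ^ 2))).
    rewrite (is_RInt_01 (fun t => atan ((v0 + t * (v1 - v0) - py) / a))).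
    replace (v0 + 1 * (v1 - v0) - py) with (v1 - py) by ring. replace (v0 + 0 * (v1 - v0) - py) with (v0 - py) by ring.
    unfold a; Rfix; ring.
    + intros t _. auto_derive. auto. Rfix. field. possq.
    + intros t _. apply (ex_derive_continuous (K:=R_AbsRing) (V:=R_NormedModule)). auto_derive. possq.
    + intros t _. unfold seg, Cinv, Cmult, Cminus, Cplus, Copp, RtoC; simpl. unfold a. field. unfold a in Ha2. possq.
Qed.

Lemma atan_pair u v : 0 < u -> 0 < v -> atan (u / v) + atan (v / u) = PI / 2.
Proof. intros. replace (v / u) with (/ (u / v)) by (field; lra).
  rewrite atan_inv. ring. apply Rdiv_lt_0_compat; auto. Qed.

Lemma wind x1 x2 y1 y2 px py : x1 < px < x2 -> y1 < py < y2 ->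
  rint (fun w => / (w - (px, py)))%C x1 x2 y1 y2 = (0, 2 * PI).
Proof. intros Hx Hy. unfold rint.
  rewrite (sint_inv_hor x1 x2 y1) by lra. rewrite (sint_inv_ver y1 y2 x2) by lra.
  rewrite (sint_inv_hor x2 x1 y2) by lra. rewrite (sint_inv_ver y2 y1 x1) by lra.
  unfold Cplus; simpl. f_equal. Rfix. field.
  replace ((x2 - px) / (y1 - py)) with (- ((x2-px)/(py-y1))) by (field; lra).
  replace ((x1 - px) / (y1 - py)) with ((px - x1)/(py - y1)) by (field; lra).
  replace ((y1 - py) / (x2 - px)) with (-((py - y1)/(x2-px))) by (field; lra).
  replace ((x1 - px) / (y2 - py)) with (- ((px-x1)/(y2-py))) by (field; lra).
  replace ((y1 - py) / (x1 - px)) with ((py - y1)/(px - x1)) by (field; lra).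
  replace ((y2 - py) / (x1 - px)) with (-((y2 - py)/(px - x1))) by (field; lra).
  rewrite !atan_opp.
  pose proof (atan_pair (x2-px) (py-y1) ltac:(lra) ltac:(lra)).
  pose proof (atan_pair (px-x1) (py-y1) ltac:(lra) ltac:(lra)).
  pose proof (atan_pair (y2-py) (x2-px) ltac:(lra) ltac:(lra)).
  pose proof (atan_pair (px-x1) (y2-py) ltac:(lra) ltac:(lra)).
  Rfix. lra. Qed.

Lemma Csub_eq z w : Defs.Csub z w = (z - w)%C.
Proof. reflexivity. Qed.
Lemma Cmul_eq z w : Defs.Cmul z w = (z * w)%C.
Proof. reflexivity. Qed.
Lemma Cadd_eq z w : Defs.Cadd z w = (z + w)%C.
Proof. reflexivity. Qed.
Lemma Cpow_eq z n : Defs.Cpow z n = (z ^ n)%C.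
Proof. induction n; simpl; [reflexivity|]. rewrite IHn. reflexivity. Qed.
Lemma Cmod_eq z : Defs.Cmod z = Cmod z.
Proof. unfold Defs.Cmod, Cmod. f_equal. simpl. ring. Qed.

Lemma Csum_ext u v N : (forall n, u n = v n) -> Csum u N = Csum v N.
Proof. intros H. induction N; simpl; rewrite ?IHN, ?H; reflexivity. Qed.

Lemma Csum2 u : Csum u 2 = (u 0%nat + u 1%nat + u 2%nat)%C.
Proof. reflexivity. Qed.

Definition PS2 (f : C -> C) (p : C) : Prop :=
  exists c1 c2 K r, 0 < r /\ 0 <= K /\ forall w, Cmod (w - p) < r ->
    Cmod (f w - f p - c1 * (w - p) - c2 * (w - p) * (w - p)) <= K * Cmod (w - p) ^ 3.

Lemma lim_Cmod_le (u : nat -> C) (l T : C) M :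
  Un_cv (fun N => fst (u N)) (fst l) -> Un_cv (fun N => snd (u N)) (snd l) ->
  (forall N, (2 <= N)%nat -> Cmod (u N - T) <= M) -> Cmod (l - T) <= M.
Proof. intros H1 H2 HM. apply Rle_plus_epsilon. intros e He.
  destruct (H1 (e/2)) as [N1 HN1]; [lra|]. destruct (H2 (e/2)) as [N2 HN2]; [lra|].
  set (N := (N1 + N2 + 2)%nat).
  specialize (HN1 N ltac:(unfold N; lia)). specialize (HN2 N ltac:(unfold N; lia)).
  specialize (HM N ltac:(unfold N; lia)). unfold R_dist in *.
  replace (l - T)%C with ((l - u N) + (u N - T))%C by ring.
  eapply Rle_trans. apply Cmod_triangle.
  assert (Cmod (l - u N) <= e).
  { eapply Rle_trans. apply Cmod_le_sum. simpl.
    rewrite <- (Rabs_Ropp (fst l + - fst (u N))), <- (Rabs_Ropp (snd l + - snd (u N))).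
    replace (- (fst l + - fst (u N))) with (fst (u N) - fst l) by ring.
    replace (- (snd l + - snd (u N))) with (snd (u N) - snd l) by ring. lra. }
  lra. Qed.

Lemma ps_PS2 (f : C -> C) z0 r (c : nat -> C) : 0 < r ->
  (forall z, Cmod (z - z0) < r -> Cseries_cv (fun n => (c n * (z - z0) ^ n)%C) (f z)) -> PS2 f z0.
Proof. intros Hr Hs.
  set (rho := r / 2). assert (Hrho : 0 < rho) by (unfold rho; lra).
  set (zr := (z0 + RtoC rho)%C).
  assert (Hzr : Cmod (zr - z0) < r).
  { unfold zr. replace (z0 + RtoC rho - z0)%C with (RtoC rho) by ring. rewrite Cmod_R, Rabs_pos_eq; unfold rho; lra. }
  destruct (Hs zr Hzr) as [Hc1 Hc2].
  set (u := fun n => (c n * (zr - z0) ^ n)%C) in *.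
  destruct (maj_by_pos _ (exist _ _ Hc1)) as [B1 [HB1 HB1']].
  destruct (maj_by_pos _ (exist _ _ Hc2)) as [B2 [HB2 HB2']].
  assert (HS : forall N, Cmod (Csum u N) <= B1 + B2).
  { intros N. eapply Rle_trans. apply Cmod_le_sum. specialize (HB1' N); specialize (HB2' N); simpl in *; lra. }
  set (B := 2 * (B1 + B2)).
  assert (Hcb : forall n, Cmod (c n) * rho ^ n <= B).
  { intros n. assert (E : Cmod (u n) = Cmod (c n) * rho ^ n).
    { unfold u. rewrite Cmod_mult, Cmod_pow. unfold zr. replace (z0 + RtoC rho - z0)%C with (RtoC rho) by ring.
      rewrite Cmod_R, Rabs_pos_eq; lra. }
    rewrite <- E. destruct n.
    - pose proof (HS O). simpl in H. unfold B; lra.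
    - replace (u (S n)) with (Csum u (S n) - Csum u n)%C by (simpl; rewrite Cadd_eq; ring).
      eapply Rle_trans. apply Cmod_triangle. rewrite Cmod_opp. pose proof (HS (S n)); pose proof (HS n). unfold B; lra. }
  assert (HB : 0 <= B) by (unfold B; lra).
  set (K := 2 * B / rho ^ 3).
  assert (Main : forall w, Cmod (w - z0) < rho / 2 ->
    Cmod (f w - (c 0%nat + c 1%nat * (w - z0) + c 2%nat * (w - z0) * (w - z0)))%C <= K * Cmod (w - z0) ^ 3).
  { intros w Hw. set (z := (w - z0)%C) in *. set (m := Cmod z) in *. set (q := m / rho).
    assert (Hm : 0 <= m) by apply Cmod_ge_0.
    assert (Hq : 0 <= q <= / 2) by (unfold q; split; [apply Rdiv_le_0_compat; lra| apply Rmult_le_reg_l with rho; [lra|]; field_simplify; lra]).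
    assert (Hw' : Cmod (w - z0) < r) by (fold z; fold m; unfold rho in *; lra).
    destruct (Hs w Hw') as [H1 H2].
    set (v := fun n => (c n * (w - z0) ^ n)%C) in *.
    set (T := (c 0%nat + c 1%nat * z + c 2%nat * z * z)%C).
    assert (Hv : forall n, Cmod (v n) <= B * q ^ n).
    { intros n. unfold v. rewrite Cmod_mult, Cmod_pow. fold z m.
      replace (m ^ n) with (rho ^ n * q ^ n).
      rewrite <- Rmult_assoc. apply Rmult_le_compat_r. apply pow_le; lra. apply Hcb.
      rewrite <- Rpow_mult_distr. f_equal. unfold q; field; lra. }
    assert (Ind : forall k, Cmod (Csum v (k + 2) - T) <= 2 * B * q ^ 3 * (1 - (/2) ^ k)).
    { induction k.
      - change (Csum v (0+2)) with (Csum v 2). rewrite Csum2. unfold v, T. fold z. simpl Cpow. replace (c 0%nat * 1 + c 1%nat * (z * 1) + c 2%nat * (z * (z * 1)) - (c 0%nat + c 1%nat * z + c 2%nat * z * z))%C with (RtoC 0) by ring.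
        rewrite Cmod_0. simpl; lra.
      - replace (S k + 2)%nat with (S (k + 2)) by lia. simpl Csum. rewrite Cadd_eq.
        replace (Csum v (k + 2) + v (S (k + 2)) - T)%C with ((Csum v (k + 2) - T) + v (S (k + 2)))%C by ring.
        eapply Rle_trans. apply Cmod_triangle. eapply Rle_trans. apply Rplus_le_compat. apply IHk. apply Hv.
        replace (S (k + 2)) with (k + 3)%nat by lia. rewrite pow_add.
        assert (q ^ k <= (/2) ^ k) by (apply pow_incr; lra).
        assert (0 <= q ^ 3) by (apply pow_le; lra).
        assert (X : B * q^3 * q^k <= B * q^3 * (/2)^k) by (apply Rmult_le_compat_l; [apply Rmult_le_pos; lra | lra]).
        replace ((/2)^(S k)) with (/2 * (/2)^k) by reflexivity. nra. }
    replace (f w) with (fst (f w), snd (f w)) by (destruct (f w); reflexivity).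
    apply lim_Cmod_le with (u := Csum v); auto.
    intros N HN. replace N with ((N - 2) + 2)%nat by lia. eapply Rle_trans. apply Ind.
    assert (0 < (/2) ^ (N - 2)) by (apply pow_lt; lra).
    assert (0 <= q ^ 3) by (apply pow_le; lra).
    unfold K. replace (2 * B / rho ^ 3 * m ^ 3) with (2 * B * q ^ 3) by (unfold q; field; lra). assert (0 <= B * q ^ 3) by (apply Rmult_le_pos; lra). nra. }
  assert (Hf0 : f z0 = c 0%nat).
  { pose proof (Main z0) as M0. replace (z0 - z0)%C with (RtoC 0) in M0 by ring. rewrite Cmod_0 in M0.
    specialize (M0 ltac:(lra)). rewrite pow_i in M0 by lia.
    replace (c 0%nat + c 1%nat * 0 + c 2%nat * 0 * 0)%C with (c 0%nat) in M0 by ring.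
    assert (Cmod (f z0 - c 0%nat) = 0) by (pose proof (Cmod_ge_0 (f z0 - c 0%nat)); lra).
    apply Cmod_eq_0 in H. replace (f z0) with ((f z0 - c 0%nat) + c 0%nat)%C by ring. rewrite H. ring. }
  exists (c 1%nat), (c 2%nat), K, (rho / 2). split; [lra|]. split.
  unfold K. apply Rdiv_le_0_compat; [lra| apply pow_lt; lra].
  intros w Hw. rewrite Hf0. replace (f w - c 0%nat - c 1%nat * (w - z0) - c 2%nat * (w - z0) * (w - z0))%C
    with (f w - (c 0%nat + c 1%nat * (w - z0) + c 2%nat * (w - z0) * (w - z0)))%C by ring.
  apply Main; auto. Qed.

Lemma Cmod_div' (a b : C) : b <> RtoC 0 -> Cmod (a / b) = Cmod a / Cmod b.
Proof. intros. unfold Cdiv. rewrite Cmod_mult, Cmod_inv; auto. Qed.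

Lemma PS2_D1c f p : PS2 f p -> D1c f p.
Proof. intros [c1 [c2 [K [r [Hr [HK Hb]]]]]].
  exists r; split; auto.
  exists (fun w => if Ceq_dec w p then c1 else ((f w - f p) / (w - p))%C). split.
  - intros e He. set (A := Cmod c2 + K + 1). assert (HA : 0 < A) by (unfold A; pose proof (Cmod_ge_0 c2); lra).
    exists (Rmin r (Rmin 1 (e / A))). split. apply Rmin_pos; auto. apply Rmin_pos; [lra|]. apply Rdiv_lt_0_compat; auto.
    intros w Hw. destruct (Ceq_dec p p) as [_|n]; [|exfalso; auto].
    destruct (Ceq_dec w p) as [E|E].
    + replace (c1 - c1)%C with (RtoC 0) by ring. rewrite Cmod_0; auto.
    + assert (Hz : (w - p)%C <> RtoC 0). { intro X; apply E. replace w with ((w - p) + p)%C by ring. rewrite X; ring. }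
      set (z := (w - p)%C) in *. set (m := Cmod z).
      assert (Hm : 0 < m) by (apply Cmod_pos; auto).
      assert (Hw1 : m < r) by (eapply Rlt_le_trans; [apply Hw|apply Rmin_l]).
      assert (Hw2 : m < 1) by (eapply Rlt_le_trans; [apply Hw|]; eapply Rle_trans; [apply Rmin_r|apply Rmin_l]).
      assert (Hw3 : m < e / A) by (eapply Rlt_le_trans; [apply Hw|]; eapply Rle_trans; [apply Rmin_r|apply Rmin_r]).
      replace ((f w - f p) / z - c1)%C with (((f w - f p - c1 * z - c2 * z * z) + c2 * z * z) / z)%C by (field; auto).
      rewrite Cmod_div' by auto. fold m.
      apply Rle_lt_trans with ((K * m ^ 3 + Cmod c2 * (m * m)) / m).
      { apply Rmult_le_compat_r. left; apply Rinv_0_lt_compat; auto.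
        eapply Rle_trans. apply Cmod_triangle. apply Rplus_le_compat. apply Hb. auto.
        rewrite <- Rmult_assoc. rewrite Cmod_mult, Cmod_mult. fold m. right; ring. }
      replace ((K * m ^ 3 + Cmod c2 * (m * m)) / m) with (m * (K * m + Cmod c2)) by (field; lra).
      apply Rle_lt_trans with (m * A). apply Rmult_le_compat_l. lra. unfold A. pose proof (Cmod_ge_0 c2). nra.
      apply Rmult_lt_reg_r with (/ A). apply Rinv_0_lt_compat; auto.
      replace (m * A * / A) with m by (field; lra). exact Hw3.
  - intros w Hw. destruct (Ceq_dec w p) as [E|E].
    + subst. ring.
    + field. intro X; apply E. replace w with ((w - p) + p)%C by ring. rewrite X; ring. Qed.

Lemma onB_neq x1 x2 y1 y2 z p : onB x1 x2 y1 y2 z -> x1 < fst p < x2 -> y1 < snd p < y2 -> z <> p.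
Proof. intros [_ H] Hx Hy E. subst. lra. Qed.

Theorem cauchy_formula f x1 x2 y1 y2 p : x1 < fst p < x2 -> y1 < snd p < y2 ->
  (forall z, inR x1 x2 y1 y2 z -> PS2 f z) ->
  rint (fun w => f w / (w - p))%C x1 x2 y1 y2 = ((0%R, (2 * PI)%R) * f p)%C.
Proof. intros Hx Hy HPS.
  assert (Hpin : inR x1 x2 y1 y2 p) by (unfold inR; lra).
  destruct (HPS p Hpin) as [c1 [c2 [K [r [Hr [HK Hb]]]]]].
  set (g := fun w => if Ceq_dec w p then c1 else ((f w - f p) / (w - p))%C).
  assert (HDg : forall z, inR x1 x2 y1 y2 z -> D1c g z).
  { intros z Hz. destruct (Ceq_dec z p) as [E|E].
    - subst z. exists r; split; auto.
      exists (fun w => if Ceq_dec w p then c2 else ((g w - c1) / (w - p))%C). split.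
      + intros e He. set (A := K + 1).
        exists (Rmin r (e / A)). split. apply Rmin_pos; auto. apply Rdiv_lt_0_compat; unfold A; lra.
        intros w Hw. destruct (Ceq_dec p p) as [_|n]; [|exfalso; auto].
        destruct (Ceq_dec w p) as [E|E].
        * replace (c2 - c2)%C with (RtoC 0) by ring. rewrite Cmod_0; auto.
        * assert (Hz0 : (w - p)%C <> RtoC 0). { intro X; apply E. replace w with ((w - p) + p)%C by ring. rewrite X; ring. }
          unfold g. destruct (Ceq_dec w p) as [E'|_]; [contradiction|].
          set (z := (w - p)%C) in *. set (m := Cmod z).
          assert (Hm : 0 < m) by (apply Cmod_pos; auto).
          assert (Hw1 : m < r) by (eapply Rlt_le_trans; [apply Hw|apply Rmin_l]).
          assert (Hw3 : m < e / A) by (eapply Rlt_le_trans; [apply Hw|apply Rmin_r]).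
          replace (((f w - f p) / z - c1) / z - c2)%C with ((f w - f p - c1 * z - c2 * z * z) / (z * z))%C by (field; auto).
          rewrite Cmod_div' by (apply Cmult_neq_0; auto). rewrite Cmod_mult. fold m.
          apply Rle_lt_trans with (K * m ^ 3 / (m * m)).
          { apply Rmult_le_compat_r. left; apply Rinv_0_lt_compat; nra. apply Hb; auto. }
          replace (K * m ^ 3 / (m * m)) with (K * m) by (field; lra).
          apply Rle_lt_trans with (A * m). unfold A; nra.
          apply Rmult_lt_reg_r with (/ A). apply Rinv_0_lt_compat; unfold A; lra.
          replace (A * m * / A) with m by (field; unfold A; lra). unfold Rdiv in Hw3. lra.
      + intros w Hw. unfold g. destruct (Ceq_dec p p) as [_|n]; [|exfalso; auto].
        destruct (Ceq_dec w p) as [E|E].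
        * subst. ring.
        * field. intro X; apply E. replace w with ((w - p) + p)%C by ring. rewrite X; ring.
    - assert (Hzp : (z - p)%C <> RtoC 0). { intro X; apply E. replace z with ((z - p) + p)%C by ring. rewrite X; ring. }
      apply D1c_local with (h := fun w => ((f w - f p) / (w - p))%C) (r := Cmod (z - p)).
      apply Cmod_pos; auto.
      + intros w Hw. unfold g. destruct (Ceq_dec w p) as [E'|E']; auto.
        subst w. rewrite Cmod_minus_sym in Hw. lra.
      + apply D1c_div. apply D1c_minus. apply PS2_D1c; auto. apply D1c_const.
        apply D1c_minus. apply D1c_id. apply D1c_const. auto. }
  assert (Hg0 : rint g x1 x2 y1 y2 = RtoC 0) by (apply goursat; auto; lra).
  assert (Hbok1 : bok (fun w => f p * / (w - p))%C x1 x2 y1 y2).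
  { intros z Hz. apply ccont_mult. apply ccont_const. apply ccont_inv. apply ccont_minus. apply ccont_id. apply ccont_const.
    intro X. apply (onB_neq _ _ _ _ _ _ Hz Hx Hy). replace z with ((z - p) + p)%C by ring. rewrite X; ring. }
  assert (Hbok2 : bok g x1 x2 y1 y2).
  { intros z [Hz _]. apply D1c_ccont. auto. }
  rewrite (rintB_ext _ (fun w => (f p * / (w - p)) + g w)%C); try lra.
  - rewrite rintB_plus by (auto; lra). rewrite Hg0.
    assert (Hbok3 : bok (fun w => / (w - p))%C x1 x2 y1 y2).
    { intros z Hz. apply ccont_inv. apply ccont_minus. apply ccont_id. apply ccont_const.
      intro X. apply (onB_neq _ _ _ _ _ _ Hz Hx Hy). replace z with ((z - p) + p)%C by ring. rewrite X; ring. }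
    rewrite rintB_scal by (auto; lra). destruct p as [px py]. rewrite wind by (simpl in *; lra). ring.
  - intros z Hz. pose proof (onB_neq _ _ _ _ _ _ Hz Hx Hy) as Hne. unfold g.
    destruct (Ceq_dec z p) as [E|E]; [contradiction|]. field.
    intro X. apply Hne. replace z with ((z - p) + p)%C by ring. rewrite X; ring. Qed.

Fixpoint Tch (n : nat) (s : C) : C :=
  match n with
  | O => RtoC 1
  | S m => match m with O => s | S k => (RtoC 2 * s * Tch m s - Tch k s)%C end
  end.

Lemma Tch_rec n s : Tch (S (S n)) s = (RtoC 2 * s * Tch (S n) s - Tch n s)%C.
Proof. reflexivity. Qed.

Lemma Cpow_neq0 (z : C) m : z <> RtoC 0 -> (z ^ m)%C <> RtoC 0.
Proof. intros Hz E. assert (Cmod (z ^ m)%C = 0) by (rewrite E; apply Cmod_0).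
  rewrite Cmod_pow in H. assert (0 < Cmod z ^ m) by (apply pow_lt; apply Cmod_pos; auto). lra. Qed.

Lemma Tch_jouk n (z : C) : z <> RtoC 0 ->
  Tch n ((z + / z) / RtoC 2)%C = ((z ^ n + / z ^ n) / RtoC 2)%C.
Proof. intros Hz.
  assert (H2 : RtoC 2 <> RtoC 0) by (intro E; injection E; lra).
  assert (forall n, Tch n ((z + / z) / RtoC 2)%C = ((z ^ n + / z ^ n) / RtoC 2)%C /\
                    Tch (S n) ((z + / z) / RtoC 2)%C = ((z ^ (S n) + / z ^ (S n)) / RtoC 2)%C).
  { induction n0 as [|m IH].
    - split; simpl. field. auto. field. auto.
    - destruct IH as [IH1 IH2]. split; auto. rewrite Tch_rec, IH1, IH2. simpl.
      assert ((z ^ m)%C <> RtoC 0) by (apply Cpow_neq0; auto).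
      field. repeat split; auto. }
  apply H. Qed.

Lemma Cmod_pow_inv (z : C) n : z <> RtoC 0 -> Cmod (/ z ^ n) = / Cmod z ^ n.
Proof. intros Hz. rewrite Cmod_inv by (apply Cpow_neq0; auto). rewrite Cmod_pow. auto. Qed.

Lemma Tch_real_bound n s : -1 <= s <= 1 -> Cmod (Tch n (RtoC s)) <= 1.
Proof. intros Hs. set (t := sqrt (1 - s * s)).
  assert (Ht : t * t = 1 - s * s) by (unfold t; apply sqrt_sqrt; nra).
  set (z := (s, t) : C).
  assert (Hmz : Cmod z = 1). { unfold Cmod, z; simpl. replace (s * (s * 1) + t * (t * 1)) with 1 by nra. apply sqrt_1. }
  assert (Hz : z <> RtoC 0). { intro E. rewrite E, Cmod_0 in Hmz. lra. }
  assert (E : RtoC s = ((z + / z) / RtoC 2)%C).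
  { unfold z, Cinv, Cplus, Cdiv, Cmult, RtoC; simpl. f_equal.
    - replace (s * (s * 1) + t * (t * 1)) with 1 by nra. field.
    - replace (s * (s * 1) + t * (t * 1)) with 1 by nra. field. }
  rewrite E, Tch_jouk by auto. unfold Cdiv. rewrite Cmod_mult.
  rewrite Cmod_inv by (intro X; injection X; lra). rewrite Cmod_R, Rabs_pos_eq by lra.
  eapply Rle_trans. apply Rmult_le_compat_r. left; apply Rinv_0_lt_compat; lra. apply Cmod_triangle.
  rewrite Cmod_pow, Cmod_pow_inv, Hmz by auto. rewrite pow1, Rinv_1. lra. Qed.

Lemma Csqrt_ex (w : C) : exists s : C, (s * s)%C = w.
Proof. destruct w as [x y]. set (m := Cmod (x, y)).
  assert (Hx : Rabs x <= m) by (apply (Cmod_re_le (x,y))).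
  assert (Hmm : m * m = x * x + y * y). { unfold m, Cmod; simpl. rewrite sqrt_sqrt. ring. nra. }
  assert (Hm0 : 0 <= m) by apply Cmod_ge_0.
  set (a := sqrt ((m + x) / 2)). set (b := sqrt ((m - x) / 2)).
  assert (Ha : a * a = (m + x) / 2) by (unfold a; apply sqrt_sqrt; apply Rabs_le_between in Hx ; lra).
  assert (Hb : b * b = (m - x) / 2) by (unfold b; apply sqrt_sqrt; apply Rabs_le_between in Hx ; lra).
  assert (Ha0 : 0 <= a) by apply sqrt_pos. assert (Hb0 : 0 <= b) by apply sqrt_pos.
  assert (Hab : (2 * a * b) * (2 * a * b) = y * y) by nra.
  assert (Hab0 : 0 <= 2 * a * b) by nra.
  destruct (Rle_dec 0 y) as [Hy|Hy].
  - exists (a, b). unfold Cmult; simpl. f_equal. nra.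
    assert (2 * a * b = y). { apply Rsqr_inj; [lra|lra|unfold Rsqr; lra]. } nra.
  - exists (a, - b). unfold Cmult; simpl. f_equal. nra.
    assert (2 * a * b = - y). { apply Rsqr_inj; [lra|lra|unfold Rsqr; nra]. } nra. Qed.

Lemma jouk_ex (sg : C) : exists z : C, z <> RtoC 0 /\ 1 <= Cmod z /\ sg = ((z + / z) / RtoC 2)%C.
Proof. destruct (Csqrt_ex (sg * sg - 1)%C) as [s Hs].
  set (z1 := (sg + s)%C). set (z2 := (sg - s)%C).
  assert (H12 : (z1 * z2)%C = RtoC 1) by (unfold z1, z2; replace ((sg + s) * (sg - s))%C with (sg*sg - s*s)%C by ring; rewrite Hs; ring).
  assert (Hz1 : z1 <> RtoC 0). { intro E. rewrite E in H12. rewrite Cmult_0_l in H12. injection H12; lra. }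
  assert (Hz2 : z2 <> RtoC 0). { intro E. rewrite E in H12. rewrite Cmult_0_r in H12. injection H12; lra. }
  assert (Hi1 : (/ z1)%C = z2). { replace z2 with (/ z1 * (z1 * z2))%C by (field; auto). rewrite H12. ring. }
  assert (Hi2 : (/ z2)%C = z1). { replace z1 with (/ z2 * (z1 * z2))%C by (field; auto). rewrite H12. ring. }
  assert (Hm : Cmod z1 * Cmod z2 = 1) by (rewrite <- Cmod_mult, H12, Cmod_1; auto).
  destruct (Rle_dec 1 (Cmod z1)) as [H|H].
  - exists z1. repeat split; auto. rewrite Hi1. unfold z1, z2. field; intro X; injection X; lra.
  - exists z2. repeat split; auto.
    + pose proof (Cmod_ge_0 z1). pose proof (Cmod_ge_0 z2). nra.
    + rewrite Hi2. unfold z1, z2. field; intro X; injection X; lra. Qed.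

Lemma Tch_lower (sg : C) (Rr : R) n : 1 < Rr -> (Rr + / Rr) / 2 <= Cmod sg ->
  (1 - / (Rr * Rr)) / 2 * Rr ^ n <= Cmod (Tch n sg).
Proof. intros HR Hs. destruct (jouk_ex sg) as [z [Hz [H1 E]]].
  set (rho := Cmod z) in *.
  assert (Hrho : 0 < rho) by lra.
  assert (HsR : Cmod sg <= (rho + / rho) / 2).
  { rewrite E. unfold Cdiv. rewrite Cmod_mult. rewrite Cmod_inv by (intro X; injection X; lra).
    rewrite Cmod_R, Rabs_pos_eq by lra. eapply Rle_trans. apply Rmult_le_compat_r. left; apply Rinv_0_lt_compat; lra.
    apply Cmod_triangle. rewrite Cmod_inv by auto. fold rho. lra. }
  assert (HrR : Rr <= rho).
  { destruct (Rle_dec Rr rho) as [h|h]; auto. exfalso.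
    assert ((Rr + / Rr) - (rho + / rho) = (Rr - rho) * (1 - / (Rr * rho))) by (field; lra).
    assert (0 < 1 - / (Rr * rho)).
    { assert (1 < Rr * rho) by nra. assert (/ (Rr * rho) < 1). { rewrite <- Rinv_1. apply Rinv_lt_contravar; lra. } lra. }
    assert (0 < (Rr - rho) * (1 - / (Rr * rho))) by (apply Rmult_lt_0_compat; lra). lra. }
  assert (HR0 : 0 < Rr) by lra.
  destruct n as [|n].
  - simpl. rewrite Cmod_1. assert (0 < / (Rr * Rr)) by (apply Rinv_0_lt_compat; nra). lra.
  - rewrite E, Tch_jouk by auto. unfold Cdiv. rewrite Cmod_mult.
    rewrite Cmod_inv by (intro X; injection X; lra). rewrite Cmod_R, Rabs_pos_eq by lra.
    set (u := / rho). assert (Hu : 0 < u <= / Rr).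
    { unfold u. split. apply Rinv_0_lt_compat; lra. apply Rinv_le_contravar; lra. }
    assert (Hu1 : u * rho = 1) by (unfold u; field; lra).
    set (k := S n).
    assert (Hge : rho ^ k - u ^ k <= Cmod (z ^ k + / z ^ k)).
    { pose proof (Cmod_minus_le (z ^ k)%C (- / z ^ k)%C) as H.
      rewrite Cmod_opp, Cmod_pow_inv in H by auto. rewrite Cmod_pow in H. fold rho u in H.
      replace (z ^ k - - / z ^ k)%C with (z ^ k + / z ^ k)%C in H by ring.
      rewrite <- pow_inv in H. fold u in H. exact H. }
    assert (A1 : u ^ k = rho ^ k * (u ^ k * u ^ k)).
    { assert (X : u ^ k * rho ^ k = 1) by (rewrite <- Rpow_mult_distr, Hu1; apply pow1).
      replace (rho ^ k * (u ^ k * u ^ k)) with (u^k * (u^k * rho^k)) by ring. rewrite X. ring. }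
    assert (Hu' : u <= 1). { apply Rle_trans with (/ Rr). lra. rewrite <- Rinv_1. apply Rinv_le_contravar; lra. }
    assert (A2 : u ^ k * u ^ k <= / (Rr * Rr)).
    { assert (u ^ k <= u). { unfold k. simpl. assert (u ^ n <= 1) by (rewrite <- (pow1 n); apply pow_incr; lra). assert (0 <= u ^ n) by (apply pow_le; lra). nra. }
      assert (0 <= u ^ k) by (apply pow_le; lra).
      rewrite Rinv_mult. nra. }
    assert (A3 : Rr ^ k <= rho ^ k) by (apply pow_incr; lra).
    assert (A4 : 0 < 1 - / (Rr * Rr)).
    { assert (/ (Rr * Rr) < 1). { rewrite <- Rinv_1. apply Rinv_lt_contravar; nra. } lra. }
    assert (A5 : 0 <= Rr ^ k) by (apply pow_le; lra).
    assert (rho ^ k * (1 - / (Rr * Rr)) <= rho ^ k - u ^ k) by nra.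
    assert (Rr ^ k * (1 - / (Rr * Rr)) <= rho ^ k * (1 - / (Rr * Rr))) by nra.
    lra. Qed.

Fixpoint csum (f : nat -> C) (n : nat) : C :=
  match n with O => f O | S m => (csum f m + f (S m))%C end.

Lemma csum_ext_le f g n : (forall i, (i <= n)%nat -> f i = g i) -> csum f n = csum g n.
Proof. induction n; intros H; simpl. apply H; lia. rewrite IHn, H; auto. Qed.

Lemma csum_plus f g n : csum (fun i => f i + g i)%C n = (csum f n + csum g n)%C.
Proof. induction n; simpl; auto. rewrite IHn. ring. Qed.

Lemma csum_scal c f n : csum (fun i => c * f i)%C n = (c * csum f n)%C.
Proof. induction n; simpl; auto. rewrite IHn. ring. Qed.

Lemma csum_shift f n : csum f (S n) = (f O + csum (fun i => f (S i)) n)%C.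
Proof. induction n. simpl. auto. change (csum f (S (S n))) with (csum f (S n) + f (S (S n)))%C.
  rewrite IHn. simpl. ring. Qed.

Definition IsPolW (m : nat) (G : C -> C -> C) : Prop :=
  exists d : nat -> C -> C, (forall i w, ccont (d i) w) /\
    forall w x, G w x = csum (fun i => d i w * x ^ i)%C m.

Lemma IsPolW_ext m G H : (forall w x, G w x = H w x) -> IsPolW m G -> IsPolW m H.
Proof. intros E [d [Hc Hd]]. exists d; split; auto. intros; rewrite <- E; auto. Qed.

Lemma IsPolW_raise1 m G : IsPolW m G -> IsPolW (S m) G.
Proof. intros [d [Hc Hd]]. exists (fun i => if Nat.leb i m then d i else (fun _ => RtoC 0)). split.
  - intros i w. destruct (Nat.leb i m). auto. apply ccont_const.
  - intros w x. rewrite Hd. cbn [csum]. rewrite (proj2 (Nat.leb_gt (S m) m) ltac:(lia)).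
    rewrite (csum_ext_le _ (fun i => (if Nat.leb i m then d i else fun _ => RtoC 0) w * x ^ i)%C m). ring.
    intros i Hi. rewrite (proj2 (Nat.leb_le i m) Hi). auto. Qed.

Lemma IsPolW_raise m m' G : (m <= m')%nat -> IsPolW m G -> IsPolW m' G.
Proof. induction 1; auto. intros; apply IsPolW_raise1; auto. Qed.

Lemma IsPolW_const (a : C -> C) : (forall w, ccont a w) -> IsPolW 0 (fun w x => a w).
Proof. intros H. exists (fun _ => a). split; auto. intros; simpl. ring. Qed.

Lemma IsPolW_plus m G H : IsPolW m G -> IsPolW m H -> IsPolW m (fun w x => G w x + H w x)%C.
Proof. intros [d [Hc Hd]] [e [Hc' He]]. exists (fun i w => d i w + e i w)%C. split.
  intros; apply ccont_plus; auto. intros. rewrite Hd, He, <- csum_plus. apply csum_ext_le; intros; ring. Qed.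

Lemma IsPolW_scal m (a : C -> C) G : (forall w, ccont a w) -> IsPolW m G -> IsPolW m (fun w x => a w * G w x)%C.
Proof. intros Ha [d [Hc Hd]]. exists (fun i w => a w * d i w)%C. split.
  intros; apply ccont_mult; auto. intros. rewrite Hd.
  rewrite <- csum_scal. apply csum_ext_le; intros; ring. Qed.

Lemma IsPolW_shift m G : IsPolW m G -> IsPolW (S m) (fun w x => x * G w x)%C.
Proof. intros [d [Hc Hd]]. exists (fun i => match i with O => (fun _ => RtoC 0) | S j => d j end). split.
  intros [|i] w; auto. apply ccont_const.
  intros. rewrite Hd, csum_shift. simpl. rewrite <- csum_scal. rewrite Cmult_0_l, Cplus_0_l.
  apply csum_ext_le; intros; ring. Qed.

Lemma IsPolW_minus m G H : IsPolW m G -> IsPolW m H -> IsPolW m (fun w x => G w x - H w x)%C.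
Proof. intros. apply IsPolW_ext with (fun w x => G w x + (fun _ => RtoC (-1)) w * H w x)%C.
  intros; simpl; ring. apply IsPolW_plus; auto. apply IsPolW_scal; auto. intros; apply ccont_const. Qed.

Definition sgm (lam mu : R) (w : C) : C := (RtoC lam * w * w + RtoC mu)%C.

Lemma ccont_sgm lam mu w : ccont (sgm lam mu) w.
Proof. unfold sgm. apply ccont_plus. apply ccont_mult. apply ccont_mult. apply ccont_const.
  apply ccont_id. apply ccont_id. apply ccont_const. Qed.

Lemma ccont_Tch n lam mu w : ccont (fun w => Tch n (sgm lam mu w)) w.
Proof. assert (forall n, ccont (fun w => Tch n (sgm lam mu w)) w /\ ccont (fun w => Tch (S n) (sgm lam mu w)) w).
  { clear n. intro n. induction n as [|n IH].
    - split; simpl. apply ccont_const. apply ccont_sgm.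
    - destruct IH as [I1 I2]. split; auto.
      apply ccont_minus; auto. apply ccont_mult; auto. apply ccont_mult. apply ccont_const. apply ccont_sgm. }
  apply H. Qed.

Lemma T_pol lam mu n : IsPolW (2 * n) (fun w x => Tch n (sgm lam mu x)).
Proof.
  assert (forall n, IsPolW (2 * n) (fun w x => Tch n (sgm lam mu x)) /\ IsPolW (2 * S n) (fun w x => Tch (S n) (sgm lam mu x))).
  { clear n. intro n. induction n as [|n IH].
    - split; simpl.
      + apply IsPolW_ext with (fun w x => (fun _ => RtoC 1) w). intros; auto. apply IsPolW_const. intros; apply ccont_const.
      + apply IsPolW_ext with (fun w x => (fun _ => RtoC mu) w * (fun _ => RtoC 1) w + x * (x * ((fun _ => RtoC lam) w * (fun _ => RtoC 1) w)))%C.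
        intros; unfold sgm; ring.
        apply IsPolW_plus. apply IsPolW_raise with 0%nat. lia. apply IsPolW_scal. intros; apply ccont_const.
        apply IsPolW_const; intros; apply ccont_const.
        apply IsPolW_shift. apply IsPolW_shift. apply IsPolW_scal. intros; apply ccont_const.
        apply IsPolW_const; intros; apply ccont_const.
    - destruct IH as [I1 I2]. split; auto.
      apply IsPolW_ext with (fun w x => ((fun _ => RtoC (2 * mu)) w * Tch (S n) (sgm lam mu x) +
           x * (x * ((fun _ => RtoC (2 * lam)) w * Tch (S n) (sgm lam mu x)))) - Tch n (sgm lam mu x))%C.
      intros; rewrite Tch_rec; unfold sgm. rewrite !RtoC_mult. ring.
      apply IsPolW_minus. apply IsPolW_plus.
      + apply IsPolW_raise with (2 * S n)%nat. lia. apply IsPolW_scal; auto. intros; apply ccont_const.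
      + replace (2 * S (S n))%nat with (S (S (2 * S n))) by lia. apply IsPolW_shift. apply IsPolW_shift.
        apply IsPolW_scal; auto. intros; apply ccont_const.
      + apply IsPolW_raise with (2 * n)%nat. lia. auto. }
  apply H. Qed.

Fixpoint Dch (lam mu : R) (n : nat) (w x : C) : C :=
  match n with
  | O => RtoC 0
  | S m => match m with
           | O => (RtoC lam * (w + x))%C
           | S k => (RtoC 2 * sgm lam mu w * Dch lam mu m w x + RtoC 2 * RtoC lam * (w + x) * Tch m (sgm lam mu x)
                     - Dch lam mu k w x)%C
           end
  end.

Lemma Dch_id lam mu n w x : ((w - x) * Dch lam mu n w x)%C = (Tch n (sgm lam mu w) - Tch n (sgm lam mu x))%C.
Proof.
  assert (forall n, ((w - x) * Dch lam mu n w x)%C = (Tch n (sgm lam mu w) - Tch n (sgm lam mu x))%C /\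
     ((w - x) * Dch lam mu (S n) w x)%C = (Tch (S n) (sgm lam mu w) - Tch (S n) (sgm lam mu x))%C).
  { clear n. intro n. induction n as [|n IH].
    - split; simpl. ring. unfold sgm; ring.
    - destruct IH as [I1 I2]. split; auto.
      change (Dch lam mu (S (S n)) w x) with (RtoC 2 * sgm lam mu w * Dch lam mu (S n) w x + RtoC 2 * RtoC lam * (w + x) * Tch (S n) (sgm lam mu x)
                     - Dch lam mu n w x)%C.
      rewrite !Tch_rec.
      transitivity (RtoC 2 * sgm lam mu w * ((w - x) * Dch lam mu (S n) w x) + RtoC 2 * RtoC lam * (w - x) * (w + x) * Tch (S n) (sgm lam mu x)
         - (w - x) * Dch lam mu n w x)%C. ring.
      rewrite I1, I2. unfold sgm. ring. }
  apply H. Qed.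

Lemma D_pol lam mu n : IsPolW (2 * n - 1) (Dch lam mu n).
Proof.
  assert (forall n, IsPolW (2 * n - 1) (Dch lam mu n) /\ IsPolW (2 * S n - 1) (Dch lam mu (S n))).
  { clear n. intro n. induction n as [|n IH].
    - split; simpl.
      + apply IsPolW_ext with (fun w x => (fun _ => RtoC 0) w). intros; auto. apply IsPolW_const; intros; apply ccont_const.
      + apply IsPolW_ext with (fun w x => (fun w => RtoC lam * w) w + x * (fun _ => RtoC lam) w)%C.
        intros; simpl; ring.
        apply IsPolW_plus. apply IsPolW_raise with 0%nat. lia. apply IsPolW_const. intros; apply ccont_mult. apply ccont_const. apply ccont_id.
        apply IsPolW_shift. apply IsPolW_const. intros; apply ccont_const.
    - destruct IH as [I1 I2]. split; auto.
      apply IsPolW_ext with (fun w x => ((fun w => RtoC 2 * sgm lam mu w) w * Dch lam mu (S n) w x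
          + (fun w => RtoC 2 * RtoC lam * w) w * Tch (S n) (sgm lam mu x)
          + x * ((fun _ => RtoC 2 * RtoC lam) w * Tch (S n) (sgm lam mu x))) - Dch lam mu n w x)%C.
      intros; simpl; ring.
      apply IsPolW_minus. apply IsPolW_plus. apply IsPolW_plus.
      + apply IsPolW_raise with (2 * S n - 1)%nat. lia. apply IsPolW_scal; auto.
        intros; apply ccont_mult. apply ccont_const. apply ccont_sgm.
      + apply IsPolW_raise with (2 * S n)%nat. lia. apply IsPolW_scal.
        intros; apply ccont_mult. apply ccont_const. apply ccont_id. apply T_pol.
      + replace (2 * S (S n) - 1)%nat with (S (2 * S n)) by lia. apply IsPolW_shift. apply IsPolW_scal.
        intros; apply ccont_const. apply T_pol.
      + apply IsPolW_raise with (2 * n - 1)%nat. lia. auto. }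
  apply H. Qed.

Lemma cont_cmod_seg (G : C -> C) z1 z2 t0 : ccont G (seg z1 z2 t0) ->
  continuity_pt (fun t => Cmod (G (seg z1 z2 t))) t0.
Proof. intros HG e He. destruct (HG e He) as [d [Hd H]].
  exists (d / (Cmod (z2 - z1) + 1)). split. apply Rdiv_lt_0_compat; auto; pose proof (Cmod_ge_0 (z2-z1)); lra.
  intros t [_ Ht]. simpl in Ht. unfold R_dist in *. simpl. unfold R_dist.
  assert (Hc : Cmod (G (seg z1 z2 t) - G (seg z1 z2 t0)) < e).
  { apply H. rewrite Cmod_seg_diff. pose proof (Cmod_ge_0 (z2-z1)).
    apply Rle_lt_trans with (Rabs (t - t0) * (Cmod (z2 - z1) + 1)). apply Rmult_le_compat_l; [apply Rabs_pos|lra].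
    apply Rlt_le_trans with (d / (Cmod (z2 - z1) + 1) * (Cmod (z2 - z1) + 1)).
    apply Rmult_lt_compat_r; lra. right; field; lra. }
  pose proof (Cmod_minus_le (G (seg z1 z2 t)) (G (seg z1 z2 t0))).
  pose proof (Cmod_minus_le (G (seg z1 z2 t0)) (G (seg z1 z2 t))). rewrite Cmod_minus_sym in H1.
  apply Rabs_def1; lra. Qed.

Lemma sok_bound g z1 z2 : sok g z1 z2 -> exists M, forall t, 0 <= t <= 1 -> Cmod (g (seg z1 z2 t)) <= M.
Proof. intros H. destruct (continuity_ab_maj (fun t => Cmod (g (seg z1 z2 t))) 0 1) as [t0 [H1 H2]].
  lra. intros; apply cont_cmod_seg; auto. exists (Cmod (g (seg z1 z2 t0))). auto. Qed.

Lemma onB_seg x1 x2 y1 y2 z : x1 < x2 -> y1 < y2 -> onB x1 x2 y1 y2 z ->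
  exists t, 0 <= t <= 1 /\ (z = seg (x1,y1) (x2,y1) t \/ z = seg (x2,y1) (x2,y2) t \/
                           z = seg (x2,y2) (x1,y2) t \/ z = seg (x1,y2) (x1,y1) t).
Proof. intros Hx Hy [[Hz1 Hz2] [E|[E|[E|E]]]].
  - exists ((y2 - snd z) / (y2 - y1)). split. split; [apply Rdiv_le_0_compat; lra|]. apply Rmult_le_reg_r with (y2 - y1); [lra|]. field_simplify; lra.
    right; right; right. apply Ceq_comp; rewrite ?seg_fst, ?seg_snd; simpl. lra. field. lra.
  - exists ((snd z - y1) / (y2 - y1)). split. split; [apply Rdiv_le_0_compat; lra|]. apply Rmult_le_reg_r with (y2 - y1); [lra|]. field_simplify; lra.
    right; left. apply Ceq_comp; rewrite ?seg_fst, ?seg_snd; simpl. lra. field. lra.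
  - exists ((fst z - x1) / (x2 - x1)). split. split; [apply Rdiv_le_0_compat; lra|]. apply Rmult_le_reg_r with (x2 - x1); [lra|]. field_simplify; lra.
    left. apply Ceq_comp; rewrite ?seg_fst, ?seg_snd; simpl. field. lra. lra.
  - exists ((x2 - fst z) / (x2 - x1)). split. split; [apply Rdiv_le_0_compat; lra|]. apply Rmult_le_reg_r with (x2 - x1); [lra|]. field_simplify; lra.
    right; right; left. apply Ceq_comp; rewrite ?seg_fst, ?seg_snd; simpl. field. lra. lra. Qed.

Lemma bok_bound g x1 x2 y1 y2 : x1 < x2 -> y1 < y2 -> bok g x1 x2 y1 y2 ->
  exists M, 0 <= M /\ forall z, onB x1 x2 y1 y2 z -> Cmod (g z) <= M.
Proof. intros Hx Hy H. destruct (bok_edges g x1 x2 y1 y2 ltac:(lra) ltac:(lra) H) as [A1 [A2 [A3 A4]]].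
  destruct (sok_bound _ _ _ A1) as [M1 B1]. destruct (sok_bound _ _ _ A2) as [M2 B2].
  destruct (sok_bound _ _ _ A3) as [M3 B3]. destruct (sok_bound _ _ _ A4) as [M4 B4].
  exists (Rabs M1 + Rabs M2 + Rabs M3 + Rabs M4). split.
  pose proof (Rabs_pos M1); pose proof (Rabs_pos M2); pose proof (Rabs_pos M3); pose proof (Rabs_pos M4); lra.
  intros z Hz. destruct (onB_seg _ _ _ _ _ Hx Hy Hz) as [t [Ht [E|[E|[E|E]]]]]; subst z;
  pose proof (Rabs_pos M1); pose proof (Rabs_pos M2); pose proof (Rabs_pos M3); pose proof (Rabs_pos M4);
  pose proof (Rle_abs M1); pose proof (Rle_abs M2); pose proof (Rle_abs M3); pose proof (Rle_abs M4).
  specialize (B1 t Ht); lra. specialize (B2 t Ht); lra. specialize (B3 t Ht); lra. specialize (B4 t Ht); lra. Qed.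

Lemma ccont_csum (h : nat -> C -> C) m w : (forall i, ccont (h i) w) -> ccont (fun w => csum (fun i => h i w) m) w.
Proof. intros H. induction m; simpl. apply H. apply ccont_plus; auto. Qed.

Lemma bok_csum (h : nat -> C -> C) (c : nat -> C) m x1 x2 y1 y2 : (forall i, bok (h i) x1 x2 y1 y2) ->
  bok (fun w => csum (fun i => h i w * c i) m)%C x1 x2 y1 y2.
Proof. intros H z Hz. apply ccont_csum. intros i. apply ccont_mult. apply H; auto. apply ccont_const. Qed.

Lemma rintB_csum (h : nat -> C -> C) (c : nat -> C) m x1 x2 y1 y2 : x1 <= x2 -> y1 <= y2 ->
  (forall i, bok (h i) x1 x2 y1 y2) ->
  rint (fun w => csum (fun i => h i w * c i) m)%C x1 x2 y1 y2 = csum (fun i => rint (h i) x1 x2 y1 y2 * c i)%C m.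
Proof. intros Hx Hy H. induction m.
  - simpl. rewrite (rintB_ext _ (fun w => c O * h O w)%C); auto. rewrite rintB_scal; auto. ring. intros; ring.
  - simpl. rewrite rintB_plus; auto. rewrite IHm. f_equal.
    rewrite (rintB_ext _ (fun w => c (S m) * h (S m) w)%C); auto. rewrite rintB_scal; auto. ring. intros; ring.
    apply bok_csum; auto. intros z Hz. apply ccont_mult. apply H; auto. apply ccont_const. Qed.

Lemma ccont_Dch lam mu n x w : ccont (fun w => Dch lam mu n w x) w.
Proof. assert (forall n, ccont (fun w => Dch lam mu n w x) w /\ ccont (fun w => Dch lam mu (S n) w x) w).
  { clear n. intro n. induction n as [|n IH].
    - split; simpl. apply ccont_const. apply ccont_mult. apply ccont_const. apply ccont_plus. apply ccont_id. apply ccont_const.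
    - destruct IH as [I1 I2]. split; auto. simpl Dch.
      apply ccont_minus; auto. apply ccont_plus. apply ccont_mult; auto. apply ccont_mult. apply ccont_const. apply ccont_sgm.
      apply ccont_mult. apply ccont_mult. apply ccont_const. apply ccont_plus. apply ccont_id. apply ccont_const. apply ccont_const. }
  apply H. Qed.

Lemma fst_csum_real (c : nat -> C) (x : R) m :
  fst (csum (fun i => c i * RtoC x ^ i)%C m) = sum_f_R0 (fun i => fst (c i) * x ^ i) m.
Proof. induction m; simpl.
  - ring.
  - rewrite IHm. rewrite <- RtoC_pow. simpl. ring. Qed.

Section Main.
Variables a b : R.
Hypothesis Ha : 0 < a.
Hypothesis Hab : a < b.
Variable xi : R.
Hypothesis Hxi1 : 1 < xi.
Hypothesis Hxi2 : xi < (b + a) / (b - a).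

Definition al := a * a.
Definition be := b * b.
Definition lam := 2 / (be - al).
Definition mu := - (al + be) / (be - al).
Definition AA := (xi + / xi) / 2.
Definition g0 := al + be - AA * (be - al).
Definition eps0 := Rmin (a / 2) (Rmin 1 (g0 / 2)).
Definition XX := b + al + be + 1.
Definition dl := Rmin (a / 2) 1.
Definition kap := (1 - / (xi * xi)) / 2.

Lemma al_be : 0 < al < be.
Proof. unfold al, be; split; nra. Qed.

Lemma AA_lt : AA * (be - al) < al + be.
Proof. pose proof al_be. set (t0 := (b + a) / (b - a)).
  assert (Ht0 : 1 < t0). { unfold t0. apply Rmult_lt_reg_r with (b - a). lra. field_simplify; lra. }
  assert (E : (al + be) / (be - al) = (t0 + / t0) / 2). { unfold t0, al, be. field. repeat split; try (apply Rgt_not_eq; nra); try (apply Rlt_not_eq; nra). }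
  assert (AA < (t0 + / t0) / 2).
  { unfold AA. assert ((t0 + / t0) - (xi + / xi) = (t0 - xi) * (1 - / (t0 * xi))) by (field; lra).
    assert (0 < 1 - / (t0 * xi)). { assert (/ (t0 * xi) < 1). { rewrite <- Rinv_1. apply Rinv_lt_contravar; nra. } lra. }
    assert (0 < (t0 - xi) * (1 - / (t0 * xi))) by (apply Rmult_lt_0_compat; unfold t0 in *; lra). lra. }
  rewrite <- E in H0. apply Rmult_lt_reg_r with (/ (be - al)). apply Rinv_0_lt_compat; lra.
  rewrite Rmult_assoc, Rinv_r by lra. lra. Qed.

Lemma g0_pos : 0 < g0.
Proof. pose proof AA_lt. unfold g0. lra. Qed.

Lemma eps0_prop : 0 < eps0 /\ eps0 <= a / 2 /\ eps0 <= 1 /\ 2 * (eps0 * eps0) <= g0.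
Proof. pose proof g0_pos. unfold eps0.
  assert (0 < Rmin (a/2) (Rmin 1 (g0/2))) by (apply Rmin_pos; [lra| apply Rmin_pos; lra]).
  pose proof (Rmin_l (a/2) (Rmin 1 (g0/2))). pose proof (Rmin_r (a/2) (Rmin 1 (g0/2))).
  pose proof (Rmin_l 1 (g0/2)). pose proof (Rmin_r 1 (g0/2)).
  repeat split; try lra. nra. Qed.

Lemma XX_prop : b + 1 <= XX /\ 1 <= XX /\ al + be <= XX * XX.
Proof. pose proof al_be. unfold XX. repeat split; try lra. nra. Qed.

Lemma AA_ge1 : 1 < AA.
Proof. unfold AA. assert ((xi + / xi) - 2 = (xi - 1) * (xi - 1) / xi) by (field; lra).
  assert (0 < (xi - 1) * (xi - 1) / xi) by (apply Rdiv_lt_0_compat; nra). lra. Qed.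

Definition onG (w : C) : Prop := onB (- XX) (- eps0) (- XX) XX w \/ onB eps0 XX (- XX) XX w.

Lemma sgm_fst w : fst (sgm lam mu w) = lam * (fst w * fst w - snd w * snd w) + mu.
Proof. unfold sgm; simpl. ring. Qed.

Lemma sig_bound w : onG w -> AA <= Cmod (sgm lam mu w).
Proof. pose proof al_be as Hab'. pose proof AA_lt. pose proof eps0_prop as [Pe1 [Pe2 [Pe3 Pe4]]].
  pose proof XX_prop as [X1 [X2 X3]]. pose proof g0_pos.
  assert (Hlam : 0 < lam) by (unfold lam; apply Rdiv_lt_0_compat; lra).
  assert (Hdiff : 0 < be - al) by lra.
  destruct w as [u v]. intros Hw.
  assert (Case : (u = eps0 \/ u = - eps0) /\ - XX <= v <= XX \/ (Rabs u = XX \/ Rabs v = XX)).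
  { destruct Hw as [[[Hu Hv] E]|[[Hu Hv] E]]; simpl in *.
    - destruct E as [E|[E|[E|E]]].
      + right; left. rewrite E, Rabs_left; lra.
      + left; split; auto.
      + right; right. rewrite E, Rabs_left; lra.
      + right; right. rewrite E, Rabs_right; lra.
    - destruct E as [E|[E|[E|E]]].
      + left; split; auto.
      + right; left. rewrite E, Rabs_right; lra.
      + right; right. rewrite E, Rabs_left; lra.
      + right; right. rewrite E, Rabs_right; lra. }
  destruct Case as [[Hu Hv]|Hbig].
  - eapply Rle_trans; [|apply Cmod_re_le]. rewrite sgm_fst. simpl.
    assert (Huu : u * u = eps0 * eps0) by (destruct Hu; subst; ring).
    rewrite Huu.
    assert (lam * (eps0 * eps0 - v * v) + mu = (2 * (eps0 * eps0 - v * v) - (al + be)) / (be - al)) by (unfold lam, mu; field; lra).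
    rewrite H1. assert (Hn : 2 * (eps0 * eps0 - v * v) - (al + be) < 0).
    { assert (0 <= v * v) by nra. assert (0 < AA * (be - al)) by (pose proof AA_ge1; nra). unfold g0 in Pe4. nra. }
    rewrite Rabs_left.
    + apply Rmult_le_reg_r with (be - al); [lra|].
      replace (- ((2 * (eps0 * eps0 - v * v) - (al + be)) / (be - al)) * (be - al)) with (-(2 * (eps0 * eps0 - v * v) - (al + be))) by (field; lra).
      unfold g0 in Pe4. assert (0 <= v * v) by nra. nra.
    + apply Rmult_lt_reg_r with (be - al); [lra|]. unfold Rdiv. rewrite Rmult_assoc, Rinv_l by lra. lra.
  - set (w := (u, v)) in *.
    assert (Hw2 : XX <= Cmod w).
    { destruct Hbig as [E|E]. rewrite <- E. apply (Cmod_re_le w). rewrite <- E. apply (Cmod_im_le w). }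
    assert (Hm : Cmod (RtoC lam * w * w)%C = lam * (Cmod w * Cmod w)).
    { rewrite !Cmod_mult, Cmod_R, Rabs_pos_eq by lra. ring. }
    assert (Htri : Cmod (RtoC lam * w * w)%C <= Cmod (sgm lam mu w) + Cmod (RtoC mu)).
    { replace (RtoC lam * w * w)%C with (sgm lam mu w - RtoC mu)%C by (unfold sgm; ring).
      eapply Rle_trans. apply Cmod_triangle. rewrite Cmod_opp. lra. }
    rewrite Hm, Cmod_R in Htri.
    assert (Hmu : Rabs mu = (al + be) / (be - al)).
    { unfold mu. rewrite Rabs_left. field. lra. unfold Rdiv.
      apply Rmult_lt_reg_r with (be - al); [lra|]. rewrite Rmult_assoc, Rinv_l by lra. lra. }
    rewrite Hmu in Htri.
    assert (Hww : al + be <= Cmod w * Cmod w) by nra.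
    assert (lam * (Cmod w * Cmod w) >= 2 * (al + be) / (be - al)).
    { unfold lam. replace (2 / (be - al) * (Cmod w * Cmod w)) with (2 * (Cmod w * Cmod w) / (be - al)) by (field; lra).
      apply Rle_ge. unfold Rdiv; apply Rmult_le_compat_r; [left; apply Rinv_0_lt_compat; lra| lra]. }
    assert (AA <= (al + be) / (be - al)).
    { apply Rmult_le_reg_r with (be - al); [lra|]. unfold Rdiv. rewrite Rmult_assoc, Rinv_l by lra. lra. }
    assert (2 * (al + be) / (be - al) = 2 * ((al + be) / (be - al))) by (field; lra). lra.
Qed.

Definition JJ (x : R) : Prop := (-b <= x <= -a) \/ (a <= x <= b).

Lemma dl_pos : 0 < dl.
Proof. unfold dl. apply Rmin_pos; lra. Qed.

Lemma dist_bound x w : JJ x -> onG w -> dl <= Cmod (w - RtoC x).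
Proof. intros Hx Hw. pose proof eps0_prop as [Pe1 [Pe2 [Pe3 Pe4]]]. pose proof XX_prop as [X1 [X2 X3]].
  assert (Hd1 : dl <= a / 2) by apply Rmin_l. assert (Hd2 : dl <= 1) by apply Rmin_r.
  assert (Re : Rabs (fst w - x) <= Cmod (w - RtoC x)).
  { replace (fst w - x) with (fst (w - RtoC x)%C) by (simpl; ring). apply Cmod_re_le. }
  assert (Im : Rabs (snd w) <= Cmod (w - RtoC x)).
  { replace (snd w) with (snd (w - RtoC x)%C) by (simpl; ring). apply Cmod_im_le. }
  destruct w as [u v]; simpl in Re, Im.
  destruct Hw as [[[Hu Hv] E]|[[Hu Hv] E]]; simpl in *; destruct Hx as [Hx|Hx].
  - destruct E as [E|[E|[E|E]]].
    + subst u. eapply Rle_trans; [|apply Re]. rewrite Rabs_left by lra. lra.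
    + subst u. eapply Rle_trans; [|apply Re]. rewrite Rabs_right by lra. lra.
    + subst v. eapply Rle_trans; [|apply Im]. rewrite Rabs_left by lra. lra.
    + subst v. eapply Rle_trans; [|apply Im]. rewrite Rabs_right by lra. lra.
  - eapply Rle_trans; [|apply Re]. rewrite Rabs_left by lra. lra.
  - eapply Rle_trans; [|apply Re]. rewrite Rabs_right by lra. lra.
  - destruct E as [E|[E|[E|E]]].
    + subst u. eapply Rle_trans; [|apply Re]. rewrite Rabs_left by lra. lra.
    + subst u. eapply Rle_trans; [|apply Re]. rewrite Rabs_right by lra. lra.
    + subst v. eapply Rle_trans; [|apply Im]. rewrite Rabs_left by lra. lra.
    + subst v. eapply Rle_trans; [|apply Im]. rewrite Rabs_right by lra. lra.
Qed.

Lemma Qx_bound n x : JJ x -> Cmod (Tch n (sgm lam mu (RtoC x))) <= 1.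
Proof. intros Hx. pose proof al_be.
  assert (E : sgm lam mu (RtoC x) = RtoC (lam * (x * x) + mu)).
  { apply Ceq_comp; unfold sgm; simpl; ring. }
  rewrite E. apply Tch_real_bound.
  assert (Hxx : al <= x * x <= be) by (unfold al, be; destruct Hx; split; nra).
  assert (lam * (x * x) + mu = (2 * (x * x) - (al + be)) / (be - al)) by (unfold lam, mu; field; lra).
  rewrite H0. split.
  - apply Rmult_le_reg_r with (be - al); [lra|]. unfold Rdiv. rewrite Rmult_assoc, Rinv_l by lra. lra.
  - apply Rmult_le_reg_r with (be - al); [lra|]. unfold Rdiv. rewrite Rmult_assoc, Rinv_l by lra. lra.
Qed.

Lemma Q_lower n w : onG w -> kap * xi ^ n <= Cmod (Tch n (sgm lam mu w)).
Proof. intros Hw. unfold kap. apply Tch_lower; auto. apply sig_bound; auto. Qed.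

Lemma kap_pos : 0 < kap.
Proof. unfold kap. assert (/ (xi * xi) < 1). { rewrite <- Rinv_1. apply Rinv_lt_contravar; nra. } lra. Qed.

Lemma decomp (F : C -> C) x1 x2 y1 y2 n x : x1 < x2 -> y1 < y2 -> JJ x ->
  (forall w, onB x1 x2 y1 y2 w -> onG w) -> bok F x1 x2 y1 y2 ->
  rint (fun w => F w / (w - RtoC x))%C x1 x2 y1 y2 =
  (rint (fun w => F w * Dch lam mu n w (RtoC x) / Tch n (sgm lam mu w))%C x1 x2 y1 y2 +
   Tch n (sgm lam mu (RtoC x)) * rint (fun w => F w / (Tch n (sgm lam mu w) * (w - RtoC x)))%C x1 x2 y1 y2)%C.
Proof. intros Hx Hy HJ HG HF.
  assert (HQ : forall w, onB x1 x2 y1 y2 w -> Tch n (sgm lam mu w) <> RtoC 0).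
  { intros w Hw E. pose proof (Q_lower n w (HG w Hw)). rewrite E, Cmod_0 in H.
    pose proof kap_pos. assert (0 < xi ^ n) by (apply pow_lt; lra). nra. }
  assert (HW : forall w, onB x1 x2 y1 y2 w -> (w - RtoC x)%C <> RtoC 0).
  { intros w Hw E. pose proof (dist_bound x w HJ (HG w Hw)). rewrite E, Cmod_0 in H. pose proof dl_pos. lra. }
  rewrite <- rintB_scal; try lra.
  rewrite <- rintB_plus; try lra.
  - apply rintB_ext; try lra. intros w Hw.
    assert (ED : Dch lam mu n w (RtoC x) = ((Tch n (sgm lam mu w) - Tch n (sgm lam mu (RtoC x))) / (w - RtoC x))%C).
    { rewrite <- Dch_id. field. apply HW; auto. }
    rewrite ED. field. split; [apply HW; auto| apply HQ; auto].
  - intros w Hw. apply ccont_mult. apply ccont_mult. apply HF; auto. apply ccont_Dch.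
    apply ccont_inv. apply ccont_Tch. apply HQ; auto.
  - intros w Hw. apply ccont_mult. apply ccont_const. apply ccont_mult. apply HF; auto.
    apply ccont_inv. apply ccont_mult. apply ccont_Tch. apply ccont_minus. apply ccont_id. apply ccont_const.
    apply Cmult_neq_0; auto.
  - intros w Hw. apply ccont_mult. apply HF; auto.
    apply ccont_inv. apply ccont_mult. apply ccont_Tch. apply ccont_minus. apply ccont_id. apply ccont_const.
    apply Cmult_neq_0; auto.
Qed.

Lemma err_ML (F : C -> C) x1 x2 y1 y2 n x M : x1 < x2 -> y1 < y2 -> JJ x ->
  (forall w, onB x1 x2 y1 y2 w -> onG w) -> bok F x1 x2 y1 y2 ->
  (forall w, onB x1 x2 y1 y2 w -> Cmod (F w) <= M) ->
  Cmod (rint (fun w => F w / (Tch n (sgm lam mu w) * (w - RtoC x)))%C x1 x2 y1 y2) <=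
  2 * ((x2 - x1) + (y2 - y1)) * (M / (kap * xi ^ n * dl)).
Proof. intros Hx Hy HJ HG HF HM.
  pose proof kap_pos. pose proof dl_pos. assert (0 < xi ^ n) by (apply pow_lt; lra).
  assert (HQ : forall w, onB x1 x2 y1 y2 w -> Tch n (sgm lam mu w) <> RtoC 0).
  { intros w Hw E. pose proof (Q_lower n w (HG w Hw)). rewrite E, Cmod_0 in H2. nra. }
  assert (HW : forall w, onB x1 x2 y1 y2 w -> (w - RtoC x)%C <> RtoC 0).
  { intros w Hw E. pose proof (dist_bound x w HJ (HG w Hw)). rewrite E, Cmod_0 in H2. lra. }
  apply rintB_ML; try lra.
  - intros w Hw. apply ccont_mult. apply HF; auto.
    apply ccont_inv. apply ccont_mult. apply ccont_Tch. apply ccont_minus. apply ccont_id. apply ccont_const.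
    apply Cmult_neq_0; auto.
  - intros w Hw. unfold Cdiv. rewrite Cmod_mult, Cmod_inv by (apply Cmult_neq_0; auto). rewrite Cmod_mult.
    pose proof (Q_lower n w (HG w Hw)). pose proof (dist_bound x w HJ (HG w Hw)).
    pose proof (HM w Hw). pose proof (Cmod_ge_0 (F w)).
    assert (0 < kap * xi ^ n * dl) by (apply Rmult_lt_0_compat; [apply Rmult_lt_0_compat|]; auto).
    assert (0 < kap * xi ^ n) by (apply Rmult_lt_0_compat; auto).
    unfold Rdiv. apply Rmult_le_compat; auto. left; apply Rinv_0_lt_compat. apply Rmult_lt_0_compat; lra.
    apply Rinv_le_contravar; auto. apply Rmult_le_compat; lra. Qed.

Lemma poly_part (F : C -> C) x1 x2 y1 y2 n k (d : nat -> C -> C) x : x1 < x2 -> y1 < y2 ->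
  (forall w, onB x1 x2 y1 y2 w -> onG w) -> bok F x1 x2 y1 y2 -> (forall i w, ccont (d i) w) ->
  (forall w z, Dch lam mu n w z = csum (fun i => d i w * z ^ i)%C k) ->
  rint (fun w => F w * Dch lam mu n w x / Tch n (sgm lam mu w))%C x1 x2 y1 y2 =
  csum (fun i => rint (fun w => F w * d i w / Tch n (sgm lam mu w))%C x1 x2 y1 y2 * x ^ i)%C k.
Proof. intros Hx Hy HG HF Hd HD.
  assert (HQ : forall w, onB x1 x2 y1 y2 w -> Tch n (sgm lam mu w) <> RtoC 0).
  { intros w Hw E. pose proof (Q_lower n w (HG w Hw)). rewrite E, Cmod_0 in H.
    pose proof kap_pos. assert (0 < xi ^ n) by (apply pow_lt; lra). nra. }
  rewrite <- rintB_csum; try lra.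
  - apply rintB_ext; try lra. intros w Hw. rewrite HD.
    transitivity ((F w / Tch n (sgm lam mu w)) * csum (fun i => d i w * x ^ i) k)%C.
    unfold Cdiv; ring. rewrite <- csum_scal. apply csum_ext_le. intros; unfold Cdiv; ring.
  - intros i w Hw. apply ccont_mult. apply ccont_mult. apply HF; auto. apply Hd.
    apply ccont_inv. apply ccont_Tch. apply HQ; auto.
Qed.

Variables (f : R -> R) (f1 f2 : C -> C).
Hypothesis HP1 : forall z, fst z < 0 -> PS2 f1 z.
Hypothesis HP2 : forall z, 0 < fst z -> PS2 f2 z.
Hypothesis HE1 : forall x, -b <= x <= -a -> f1 (RtoC x) = RtoC (f x).
Hypothesis HE2 : forall x, a <= x <= b -> f2 (RtoC x) = RtoC (f x).

Lemma G1 w : onB (- XX) (- eps0) (- XX) XX w -> onG w.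
Proof. intros; left; auto. Qed.
Lemma G2 w : onB eps0 XX (- XX) XX w -> onG w.
Proof. intros; right; auto. Qed.

Lemma bok_f1 : bok f1 (- XX) (- eps0) (- XX) XX.
Proof. pose proof eps0_prop as [Pe1 _]. intros z [[Hz _] _]. apply D1c_ccont. apply PS2_D1c. apply HP1. lra. Qed.
Lemma bok_f2 : bok f2 eps0 XX (- XX) XX.
Proof. pose proof eps0_prop as [Pe1 _]. intros z [[Hz _] _]. apply D1c_ccont. apply PS2_D1c. apply HP2. lra. Qed.

Lemma rect_ok : - XX < - eps0 /\ eps0 < XX /\ - XX < XX.
Proof. pose proof eps0_prop as [Pe1 [Pe2 _]]. pose proof XX_prop as [X1 [X2 _]]. repeat split; lra. Qed.

Lemma rep x : JJ x ->
  (rint (fun w => f1 w / (w - RtoC x))%C (- XX) (- eps0) (- XX) XX +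
   rint (fun w => f2 w / (w - RtoC x))%C eps0 XX (- XX) XX)%C = ((0%R, (2 * PI)%R) * RtoC (f x))%C.
Proof. intros Hx. pose proof eps0_prop as [Pe1 [Pe2 _]]. pose proof XX_prop as [X1 [X2 _]].
  destruct Hx as [Hx|Hx].
  - rewrite (goursat (fun w => f2 w / (w - RtoC x))%C); try lra.
    rewrite cauchy_formula; simpl; try lra. rewrite HE1 by lra. ring.
    intros z [Hz _]. apply HP1. lra.
    intros z [Hz _]. apply D1c_div. apply PS2_D1c. apply HP2. lra. apply D1c_minus. apply D1c_id. apply D1c_const.
    intro E. assert (fst (z - RtoC x)%C = 0) by (rewrite E; reflexivity). simpl in H. lra.
  - rewrite (goursat (fun w => f1 w / (w - RtoC x))%C); try lra.
    rewrite cauchy_formula; simpl; try lra. rewrite HE2 by lra. ring.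
    intros z [Hz _]. apply HP2. lra.
    intros z [Hz _]. apply D1c_div. apply PS2_D1c. apply HP1. lra. apply D1c_minus. apply D1c_id. apply D1c_const.
    intro E. assert (fst (z - RtoC x)%C = 0) by (rewrite E; reflexivity). simpl in H. lra.
Qed.

Lemma Cmult_reg_l' (c u v : C) : c <> RtoC 0 -> (c * u)%C = (c * v)%C -> u = v.
Proof. intros Hc E. replace u with (/ c * (c * u))%C by (field; auto). rewrite E. field; auto. Qed.

Lemma Cmod_2pi : Cmod (0%R, (2 * PI)%R) = 2 * PI.
Proof. unfold Cmod; simpl. replace (0 * (0 * 1) + 2 * PI * (2 * PI * 1)) with ((2 * PI) * (2 * PI)) by ring.
  apply sqrt_square. pose proof PI_RGT_0. lra. Qed.

Lemma C2pi_neq : (0%R, (2 * PI)%R) <> RtoC 0.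
Proof. intro E. injection E. pose proof PI_RGT_0. lra. Qed.

Lemma approx_main : exists Cst, 0 < Cst /\ forall k, exists c : nat -> R,
  forall x, JJ x -> Rabs (f x - poly_eval c k x) <= Cst * / xi ^ ((k + 1) / 2).
Proof.
  pose proof rect_ok as [R1 [R2 R3]].
  destruct (bok_bound f1 (- XX) (- eps0) (- XX) XX R1 R3 bok_f1) as [M1 [HM1 BM1]].
  destruct (bok_bound f2 eps0 XX (- XX) XX R2 R3 bok_f2) as [M2 [HM2 BM2]].
  set (L1 := 2 * ((- eps0 - - XX) + (XX - - XX))). set (L2 := 2 * ((XX - eps0) + (XX - - XX))).
  assert (HL1 : 0 < L1) by (unfold L1; lra). assert (HL2 : 0 < L2) by (unfold L2; lra).
  pose proof kap_pos as Hk. pose proof dl_pos as Hd. pose proof PI_RGT_0 as Hpi.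
  set (C1 := (L1 * M1 + L2 * M2) / (kap * dl) / (2 * PI)).
  assert (HC1 : 0 <= C1).
  { unfold C1. apply Rdiv_le_0_compat; [|lra]. apply Rdiv_le_0_compat; [|apply Rmult_lt_0_compat; auto].
    apply Rplus_le_le_0_compat; apply Rmult_le_pos; lra. }
  exists (C1 + 1). split; [lra|]. intros k.
  set (n := ((k + 1) / 2)%nat).
  assert (Hn : (2 * n - 1 <= k)%nat).
  { unfold n. pose proof (Nat.div_mod (k+1) 2 ltac:(lia)). pose proof (Nat.mod_upper_bound (k+1) 2 ltac:(lia)). lia. }
  destruct (IsPolW_raise _ _ _ Hn (D_pol lam mu n)) as [d [Hdc HdD]].
  set (Q := fun w => Tch n (sgm lam mu w)).
  set (r1 := fun i => rint (fun w => f1 w * d i w / Q w)%C (- XX) (- eps0) (- XX) XX).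
  set (r2 := fun i => rint (fun w => f2 w * d i w / Q w)%C eps0 XX (- XX) XX).
  set (coef := fun i => ((r1 i + r2 i) / (0%R, (2 * PI)%R))%C).
  exists (fun i => fst (coef i)). intros x Hx.
  set (Px := csum (fun i => coef i * RtoC x ^ i)%C k).
  assert (Hpe : poly_eval (fun i => fst (coef i)) k x = fst Px).
  { unfold poly_eval, Px. rewrite fst_csum_real. reflexivity. }
  pose proof (rep x Hx) as Hrep.
  rewrite (decomp f1 _ _ _ _ n x R1 R3 Hx G1 bok_f1) in Hrep.
  rewrite (decomp f2 _ _ _ _ n x R2 R3 Hx G2 bok_f2) in Hrep.
  rewrite (poly_part f1 _ _ _ _ n k d (RtoC x) R1 R3 G1 bok_f1 Hdc HdD) in Hrep.
  rewrite (poly_part f2 _ _ _ _ n k d (RtoC x) R2 R3 G2 bok_f2 Hdc HdD) in Hrep.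
  set (E1 := rint (fun w => f1 w / (Tch n (sgm lam mu w) * (w - RtoC x)))%C (- XX) (- eps0) (- XX) XX) in *.
  set (E2 := rint (fun w => f2 w / (Tch n (sgm lam mu w) * (w - RtoC x)))%C eps0 XX (- XX) XX) in *.
  set (Qx := Tch n (sgm lam mu (RtoC x))) in *.
  assert (HS : (csum (fun i => rint (fun w => f1 w * d i w / Tch n (sgm lam mu w))%C (- XX) (- eps0) (- XX) XX * RtoC x ^ i)%C k +
                csum (fun i => rint (fun w => f2 w * d i w / Tch n (sgm lam mu w))%C eps0 XX (- XX) XX * RtoC x ^ i)%C k)%C
               = ((0%R, (2 * PI)%R) * Px)%C).
  { rewrite <- csum_plus. unfold Px. rewrite <- csum_scal. apply csum_ext_le. intros i _.
    unfold coef, r1, r2, Q. field. apply C2pi_neq. }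
  assert (Hdiff : (RtoC (f x) - Px)%C = (Qx * (E1 + E2) / (0%R, (2 * PI)%R))%C).
  { apply (Cmult_reg_l' (0%R, (2 * PI)%R)). apply C2pi_neq.
    transitivity ((0%R, (2 * PI)%R) * RtoC (f x) - (0%R, (2 * PI)%R) * Px)%C. ring.
    rewrite <- Hrep, <- HS. field. apply C2pi_neq. }
  assert (HB1 : Cmod E1 <= L1 * (M1 / (kap * xi ^ n * dl))).
  { unfold E1. eapply Rle_trans. apply (err_ML f1 (-XX) (-eps0) (-XX) XX n x M1 R1 R3 Hx G1 bok_f1 BM1). right; unfold L1; ring. }
  assert (HB2 : Cmod E2 <= L2 * (M2 / (kap * xi ^ n * dl))).
  { unfold E2. eapply Rle_trans. apply (err_ML f2 eps0 XX (-XX) XX n x M2 R2 R3 Hx G2 bok_f2 BM2). right; unfold L2; ring. }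
  assert (HQx : Cmod Qx <= 1) by (apply Qx_bound; auto).
  assert (Hxn : 0 < xi ^ n) by (apply pow_lt; lra).
  assert (Hfin : Cmod (RtoC (f x) - Px)%C <= C1 * / xi ^ n).
  { rewrite Hdiff. unfold Cdiv. rewrite Cmod_mult, Cmod_inv by apply C2pi_neq. rewrite Cmod_2pi, Cmod_mult.
    apply Rle_trans with (1 * (Cmod E1 + Cmod E2) * / (2 * PI)).
    apply Rmult_le_compat_r. left; apply Rinv_0_lt_compat; lra.
    apply Rmult_le_compat; try apply Cmod_ge_0; auto. apply Cmod_triangle.
    apply Rle_trans with ((L1 * (M1 / (kap * xi ^ n * dl)) + L2 * (M2 / (kap * xi ^ n * dl))) * / (2 * PI)).
    apply Rmult_le_compat_r. left; apply Rinv_0_lt_compat; lra. lra.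
    right. unfold C1. field. repeat split; lra. }
  rewrite Hpe. fold n. replace (f x - fst Px) with (fst (RtoC (f x) - Px)%C) by (simpl; ring).
  eapply Rle_trans. apply Cmod_re_le. eapply Rle_trans. apply Hfin.
  apply Rmult_le_compat_r. left; apply Rinv_0_lt_compat; auto. lra.
Qed.

End Main.

Lemma Un_cv_ext' (u v : nat -> R) l : (forall n, u n = v n) -> Un_cv u l -> Un_cv v l.
Proof. intros E H e He. destruct (H e He) as [N HN]. exists N. intros n Hn. rewrite <- E. auto. Qed.

Lemma analytic_PS2 (U : Cplx -> Prop) g : analytic_on U g -> forall z, U z -> PS2 g z.
Proof. intros H z Hz. destruct (H z Hz) as [r [Hr [c Hc]]]. apply (ps_PS2 g z r c Hr).
  intros w Hw. rewrite <- Cmod_eq in Hw. specialize (Hc w Hw). destruct Hc as [C1 C2].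
  assert (E : forall N, Csum (fun n => Defs.Cmul (c n) (Defs.Cpow (Defs.Csub w z) n)) N =
                        Csum (fun n => (c n * (w - z) ^ n)%C) N).
  { intros N. apply Csum_ext. intros n. rewrite Cpow_eq. reflexivity. }
  split. apply (Un_cv_ext' _ _ _ (fun N => f_equal fst (E N)) C1).
  apply (Un_cv_ext' _ _ _ (fun N => f_equal snd (E N)) C2). Qed.

Import Defs.

Theorem theorem8p10 (a b : R) (f : R -> R) (f1 f2 : Cplx -> Cplx) :
  0 < a -> a < b ->
  continuous_on f (fun x => (-b <= x <= -a) \/ (a <= x <= b)) ->
  analytic_on (fun z => Cre z < 0) f1 ->
  analytic_on (fun z => 0 < Cre z) f2 ->
  (forall x, -b <= x <= -a -> f1 (RtoC x) = RtoC (f x)) ->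
  (forall x, a <= x <= b -> f2 (RtoC x) = RtoC (f x)) ->
  forall xi : R, 1 < xi -> xi < (b + a) / (b - a) ->
  exists C0 : R, 0 < C0 /\
    forall k : nat,
      Ek_le f (fun x => (-b <= x <= -a) \/ (a <= x <= b)) k
        (C0 * Rpower xi (- (INR k) / 2)).
Proof.
  intros Ha Hab _ HA1 HA2 H1 H2 xi Hxi1 Hxi2.
  assert (P1 : forall z : R * R, fst z < 0 -> PS2 f1 z) by (intros; apply (analytic_PS2 _ _ HA1); auto).
  assert (P2 : forall z : R * R, 0 < fst z -> PS2 f2 z) by (intros; apply (analytic_PS2 _ _ HA2); auto).
  destruct (approx_main a b Ha Hab xi Hxi1 Hxi2 f f1 f2 P1 P2 H1 H2) as [Cst [HC Hk]].
  exists Cst. split; auto. intros k eps Heps.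
  destruct (Hk k) as [c Hc]. exists c.
  set (n := ((k + 1) / 2)%nat) in *.
  assert (Hxn : 0 < xi ^ n) by (apply pow_lt; lra).
  set (S := fun e => exists x, ((-b <= x <= -a) \/ (a <= x <= b)) /\ e = Rabs (f x - poly_eval c k x)).
  assert (Hb : bound S). { exists (Cst * / xi ^ n). intros e [x [Hx E]]. subst e. apply Hc; auto. }
  assert (Hne : exists e, S e). { exists (Rabs (f a - poly_eval c k a)). exists a. split; auto. right; lra. }
  destruct (completeness S Hb Hne) as [s Hs].
  exists s. split. exact Hs.
  assert (Hs1 : s <= Cst * / xi ^ n). { apply Hs. intros e [x [Hx E]]. subst e. apply Hc; auto. }
  assert (Hpow : / xi ^ n <= Rpower xi (- INR k / 2)).
  { rewrite <- Rpower_pow by lra. rewrite <- Rpower_Ropp. apply Rle_Rpower. lra.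
    assert (2 * n >= k)%nat.
    { unfold n. pose proof (Nat.div_mod (k+1) 2 ltac:(lia)). pose proof (Nat.mod_upper_bound (k+1) 2 ltac:(lia)). lia. }
    apply le_INR in H. rewrite mult_INR in H. simpl in H. lra. }
  assert (Cst * / xi ^ n <= Cst * Rpower xi (- INR k / 2)) by (apply Rmult_le_compat_l; lra).
  lra.
Qed.
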